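(* Consider the 10-dimensional system, for $i\in\{1,\dots,5\}$ with indices taken modulo $5$, $$\dot x_i=\kappa_1\big(s^+(x_{i-1})s^-(u_i)+s^-(x_{i-1})s^+(u_i)\big)-x_i,\qquad \dot u_i=\kappa_2\big(1-s^-(x_i)s^-(x_{i+1})\big)-u_i,$$ where $s^+(w)=1$ if $w>\tfrac12$ and $s^+(w)=0$ if $w<\tfrac12$, and $s^-=1-s^+$, with parameters $(\kappa_1,\kappa_2)=(1.53,2)$. Write states (boxes) as the Boolean strings $x_1u_1\ x_2u_2\ x_3u_3\ x_4u_4\ x_5u_5$, a bit being $1$ iff the variable exceeds $\tfrac12$. Then the system has an asymptotically stable periodic orbit that visits cyclically, in this order, the boxes $$\begin{array}{l}01\,11\,11\,01\,11,\;\ 01\,11\,01\,01\,11,\;\ 01\,11\,01\,11\,11,\;\ 01\,11\,01\,11\,01,\;\ 11\,11\,01\,11\,01,\\ 11\,01\,01\,11\,01,\;\ 11\,01\,11\,11\,01,\;\ 11\,01\,11\,01\,01,\;\ 11\,01\,11\,01\,11,\;\ 01\,01\,11\,01\,11,\end{array}$$ (the threshold-crossing variables being successively $x_3,x_4,x_5,x_1,x_2,x_3,x_4,x_5,x_1,x_2$). On the wall $\{x_2=\tfrac12\}$ separating the last box from the first, this orbit passes through the point whose translated coordinates $v=(x_1-\tfrac12,u_1-\tfrac12,\dots,x_5-\tfrac12,u_5-\tfrac12)$ are approximately $$v^*\approx(-0.157351,\,0.870170,\,0,\,1.46598,\,0.974368,\,1.49816,\,-0.420367,\,1.35362,\,0.790624,\,1.49209),$$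 and its period is $\log\lambda_{\max}\approx 7.29638$, where $\lambda_{\max}\approx 1474.96$.
   Context: Within each box (region where no variable equals $\tfrac12$) the right-hand side is of the form $\phi-v$ with constant focal point $\phi$, so solutions are $v(t)=\phi+(v(0)-\phi)e^{-t}$ until a variable reaches the threshold $\tfrac12$; trajectories are continued from box to box by crossing the threshold hyperplane (wall). A periodic orbit visits a cyclic sequence of boxes if its trajectory passes through exactly these boxes in this order, crossing a single threshold at each transition. Asymptotic stability refers to the orbit as an attractor of this piecewise-defined flow (equivalently, of the Poincaré return map on the wall). *)

(* Defs.v *)
From Stdlib Require Import Reals Lra Arith List.
Import ListNotations.
Open Scope R_scope.

(* A state of the 10-dimensional system: coordinates 0..9, ordered
   x1,u1,x2,u2,...,x5,u5, i.e. x_{i+1} is coordinate 2i and u_{i+1} is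
   coordinate 2i+1 (i = 0..4).  Coordinates >= 10 are irrelevant. *)
Definition state := nat -> R.

(* A box (regular domain) is a Boolean string: bit j is true iff
   coordinate j exceeds 1/2. *)
Definition box := nat -> bool.

Definition splus (b : bool) : R := if b then 1 else 0.
Definition sminus (b : bool) : R := 1 - splus b.

(* the focal point of a box:
   x_i-component: k1 (s+(x_{i-1}) s-(u_i) + s-(x_{i-1}) s+(u_i)),
   u_i-component: k2 (1 - s-(x_i) s-(x_{i+1})),   indices modulo 5. *)
Definition focal (k1 k2 : R) (b : box) : state := fun j =>
  let i := Nat.div j 2 in
  if Nat.even j then
    k1 * (splus (b (2 * ((i + 4) mod 5))%nat) * sminus (b (2 * i + 1)%nat)
          + sminus (b (2 * ((i + 4) mod 5))%nat) * splus (b (2 * i + 1)%nat))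
  else
    k2 * (1 - sminus (b (2 * i)%nat) * sminus (b (2 * ((i + 1) mod 5))%nat)).

Definition in_box (b : box) (v : state) : Prop :=
  forall j, (j < 10)%nat -> v j <> 1/2 /\ ((1/2 < v j) <-> b j = true).

(* g is a trajectory of the piecewise-linear flow on [0,T]: there is a finite
   subdivision 0 = ts 0 < ts 1 < ... < ts n = T and boxes bs k such that on
   [ts k, ts (k+1)] the trajectory is the explicit solution
   v(t) = phi + (v(ts k) - phi) e^{-(t - ts k)} of v' = phi - v with
   phi the focal point of bs k, and on the open interval it lies in box bs k.
   (Continuity at the switching times is built in.) *)
Definition traj_pieces (k1 k2 : R) (g : R -> state) (n : nat)
    (ts : nat -> R) (bs : nat -> box) (T : R) : Prop :=
  ts 0%nat = 0 /\ ts n = T /\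
  (forall k, (k < n)%nat -> ts k < ts (S k)) /\
  (forall k, (k < n)%nat -> forall t, ts k <= t <= ts (S k) ->
     (forall j, (j < 10)%nat ->
        g t j = focal k1 k2 (bs k) j
                + (g (ts k) j - focal k1 k2 (bs k) j) * exp (- (t - ts k))) /\
     (ts k < t < ts (S k) -> in_box (bs k) (g t))).

Definition solution_on (k1 k2 : R) (g : R -> state) (T : R) : Prop :=
  exists n ts bs, traj_pieces k1 k2 g n ts bs T.

Definition solution (k1 k2 : R) (g : R -> state) : Prop :=
  forall T, 0 < T -> solution_on k1 k2 g T.

Definition near_orbit (g : R -> state) (T eps : R) (v : state) : Prop :=
  exists t, 0 <= t <= T /\ forall j, (j < 10)%nat -> Rabs (v j - g t j) < eps.

Definition asymptotically_stable_orbit (k1 k2 : R) (g : R -> state) (T : R)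
  : Prop :=
  (exists d, 0 < d /\ forall p, near_orbit g T d p ->
      exists h, solution k1 k2 h /\ h 0 = p) /\
  (forall eps, 0 < eps -> exists d, 0 < d /\
      forall h, solution k1 k2 h -> near_orbit g T d (h 0) ->
        forall t, 0 <= t -> near_orbit g T eps (h t)) /\
  (exists d, 0 < d /\
      forall h, solution k1 k2 h -> near_orbit g T d (h 0) ->
        forall eps, 0 < eps -> exists t0, 0 <= t0 /\
          forall t, t0 <= t -> near_orbit g T eps (h t)).

Definition mkbox (l : list bool) : box := fun j => List.nth j l false.

Definition cycle_boxes : list (list bool) :=
  let o := false in let i := true in
  [ [o;i; i;i; i;i; o;i; i;i];
    [o;i; i;i; o;i; o;i; i;i];
    [o;i; i;i; o;i; i;i; i;i];
    [o;i; i;i; o;i; i;i; o;i];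
    [i;i; i;i; o;i; i;i; o;i];
    [i;i; o;i; o;i; i;i; o;i];
    [i;i; o;i; i;i; i;i; o;i];
    [i;i; o;i; i;i; o;i; o;i];
    [i;i; o;i; i;i; o;i; i;i];
    [o;i; o;i; i;i; o;i; i;i] ]%list.

Definition cycle_box (k : nat) : box := mkbox (List.nth k cycle_boxes nil).

Definition vstar : list R :=
  [-157351/1000000; 870170/1000000; 0; 146598/100000; 974368/1000000;
   149816/100000; -420367/1000000; 135362/100000; 790624/1000000;
   149209/100000]%list.

Definition kappa1 : R := 153 / 100.
Definition kappa2 : R := 2.

(* Main.v *)
Require Import Defs.
From Stdlib Require Import Reals Lra Lia List Arith ZArith ClassicalEpsilon FunctionalExtensionality.
Import ListNotations.
Open Scope R_scope.


Definition bx (m : nat) : box := cycle_box (m mod 10).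
Definition F (m j : nat) : R := focal kappa1 kappa2 (bx m) j.
Definition exl : list nat := [4;6;8;0;2;4;6;8;0;2]%nat.
Definition ex (m : nat) : nat := nth (m mod 10) exl 0%nat.
Definition en (m : nat) : nat := ex (m + 9).
Definition io (m : nat) (w : state) : R := (F m (ex m) - w (ex m)) / (F m (ex m) - 1/2).
Definition Pm (m : nat) (w : state) : state := fun j => F m j + (w j - F m j) / io m w.
Definition flw (m : nat) (w : state) (u : R) : state :=
  fun j => F m j + (w j - F m j) * exp (- u).
Definition side (b : box) (j : nat) (x : R) : Prop := if b j then 1/2 < x else x < 1/2.
Definition wside (b : box) (j : nat) (x : R) : Prop := if b j then 1/2 <= x else x <= 1/2.
Definition Rr : R := 1/10000000.
Definition th : R := 4/5.
Definition AL : list (list R) := [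
  [342649375205085665780437/1000000000000000000000000; 685085242787700152276863/500000000000000000000000; 1/2; 982990906780700982598981/500000000000000000000000; 737183955158272713535091/500000000000000000000000; 399632523728384356506491/200000000000000000000000; 19908293158528534917023/250000000000000000000000; 1853624941174298062377531/1000000000000000000000000; 258124723552147206377083/200000000000000000000000; 1992094028737852049515939/1000000000000000000000000];
  [116202127300613576754653/1000000000000000000000000; 1786406937502669913281217/1000000000000000000000000; 590348884631709741907323/500000000000000000000000; 1988463467564451276741163/1000000000000000000000000; 1/2; 1999376891837776185257281/1000000000000000000000000; 27005868778376006276611/1000000000000000000000000; 1950360063522314675229761/1000000000000000000000000; 1448820675435119148724803/1000000000000000000000000; 399463772155726683866557/200000000000000000000000];
  [19908293158528534917023/250000000000000000000000; 1853624941174298062377531/1000000000000000000000000; 258124723552147206377083/200000000000000000000000; 1992094028737852049515939/1000000000000000000000000; 342649375205085665780437/1000000000000000000000000; 685085242787700152276863/500000000000000000000000; 1/2; 982990906780700982598981/500000000000000000000000; 737183955158272713535091/500000000000000000000000; 399632523728384356506491/200000000000000000000000];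
  [27005868778376006276611/1000000000000000000000000; 1950360063522314675229761/1000000000000000000000000; 1448820675435119148724803/1000000000000000000000000; 399463772155726683866557/200000000000000000000000; 116202127300613576754653/1000000000000000000000000; 1786406937502669913281217/1000000000000000000000000; 590348884631709741907323/500000000000000000000000; 1988463467564451276741163/1000000000000000000000000; 1/2; 1999376891837776185257281/1000000000000000000000000];
  [1/2; 982990906780700982598981/500000000000000000000000; 737183955158272713535091/500000000000000000000000; 399632523728384356506491/200000000000000000000000; 19908293158528534917023/250000000000000000000000; 1853624941174298062377531/1000000000000000000000000; 258124723552147206377083/200000000000000000000000; 1992094028737852049515939/1000000000000000000000000; 342649375205085665780437/1000000000000000000000000; 685085242787700152276863/500000000000000000000000];
  [590348884631709741907323/500000000000000000000000; 1988463467564451276741163/1000000000000000000000000; 1/2; 1999376891837776185257281/1000000000000000000000000; 27005868778376006276611/1000000000000000000000000; 1950360063522314675229761/1000000000000000000000000; 1448820675435119148724803/1000000000000000000000000; 399463772155726683866557/200000000000000000000000; 116202127300613576754653/1000000000000000000000000; 1786406937502669913281217/1000000000000000000000000];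
  [258124723552147206377083/200000000000000000000000; 1992094028737852049515939/1000000000000000000000000; 342649375205085665780437/1000000000000000000000000; 685085242787700152276863/500000000000000000000000; 1/2; 982990906780700982598981/500000000000000000000000; 737183955158272713535091/500000000000000000000000; 399632523728384356506491/200000000000000000000000; 19908293158528534917023/250000000000000000000000; 1853624941174298062377531/1000000000000000000000000];
  [1448820675435119148724803/1000000000000000000000000; 399463772155726683866557/200000000000000000000000; 116202127300613576754653/1000000000000000000000000; 1786406937502669913281217/1000000000000000000000000; 590348884631709741907323/500000000000000000000000; 1988463467564451276741163/1000000000000000000000000; 1/2; 1999376891837776185257281/1000000000000000000000000; 27005868778376006276611/1000000000000000000000000; 1950360063522314675229761/1000000000000000000000000];
  [737183955158272713535091/500000000000000000000000; 399632523728384356506491/200000000000000000000000; 19908293158528534917023/250000000000000000000000; 1853624941174298062377531/1000000000000000000000000; 258124723552147206377083/200000000000000000000000; 1992094028737852049515939/1000000000000000000000000; 342649375205085665780437/1000000000000000000000000; 685085242787700152276863/500000000000000000000000; 1/2; 982990906780700982598981/500000000000000000000000];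
  [1/2; 1999376891837776185257281/1000000000000000000000000; 27005868778376006276611/1000000000000000000000000; 1950360063522314675229761/1000000000000000000000000; 1448820675435119148724803/1000000000000000000000000; 399463772155726683866557/200000000000000000000000; 116202127300613576754653/1000000000000000000000000; 1786406937502669913281217/1000000000000000000000000; 590348884631709741907323/500000000000000000000000; 1988463467564451276741163/1000000000000000000000000]].
Definition YL : list (list R) := [
  [1; 468/625; 19/20; 2429/5000; 6923/10000; 959/5000; 3717/5000; 7031/10000; 393/400; 1547/5000];
  [997/2000; 897/2000; 1539/2500; 431/2000; 1189/2000; 829/10000; 3353/10000; 663/2000; 2351/5000; 673/5000];
  [4551/10000; 861/2000; 3009/5000; 1893/10000; 3063/5000; 459/1000; 5819/10000; 2973/10000; 4237/10000; 587/5000];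
  [2053/10000; 203/1000; 36/125; 103/1250; 1527/5000; 2749/10000; 377/1000; 33/250; 3639/10000; 127/2500];
  [3563/10000; 1821/10000; 649/2500; 719/10000; 697/2500; 2639/10000; 1843/5000; 29/250; 3751/10000; 2811/10000];
  [231/1000; 809/10000; 223/1000; 39/1250; 1259/10000; 249/2000; 353/2000; 101/2000; 1871/10000; 421/2500];
  [2259/10000; 89/1250; 2299/10000; 69/400; 1093/5000; 559/5000; 199/1250; 221/5000; 1709/10000; 809/5000];
  [541/5000; 311/10000; 1147/10000; 517/5000; 1417/10000; 497/10000; 171/1250; 12/625; 193/2500; 191/2500];
  [61/625; 17/625; 131/1250; 497/5000; 693/5000; 219/5000; 1411/10000; 1059/10000; 1341/10000; 343/5000];
  [839/10000; 119/10000; 237/5000; 47/1000; 133/2000; 12/625; 141/2000; 127/2000; 87/1000; 153/5000]].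
Definition FL : list (list R) := [
  [0; 2; 153/100; 2; 0; 2; 0; 2; 153/100; 2];
  [0; 2; 153/100; 2; 0; 0; 153/100; 2; 153/100; 2];
  [0; 2; 153/100; 2; 0; 2; 153/100; 2; 0; 2];
  [153/100; 2; 153/100; 2; 0; 2; 153/100; 2; 0; 0];
  [153/100; 2; 0; 2; 0; 2; 153/100; 2; 0; 2];
  [153/100; 2; 0; 0; 153/100; 2; 153/100; 2; 0; 2];
  [153/100; 2; 0; 2; 153/100; 2; 0; 2; 0; 2];
  [153/100; 2; 0; 2; 153/100; 2; 0; 0; 153/100; 2];
  [0; 2; 0; 2; 153/100; 2; 0; 2; 153/100; 2];
  [0; 0; 153/100; 2; 153/100; 2; 0; 2; 153/100; 2]].
Definition ILL : list R := [294873568217309/100000000000000; 182402196321799/125000000000000; 294873573589309/100000000000000; 1459217583195751/1000000000000000; 294873576871309/100000000000000; 1459217590904489/1000000000000000; 294873578879309/100000000000000; 364804398908161/250000000000000; 294873580111309/100000000000000; 182402199815731/125000000000000].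
Definition IHL : list R := [2948735959093091/1000000000000000; 1459217635681189/1000000000000000; 2948735905373091/1000000000000000; 145921762305983/100000000000000; 2948735872553091/1000000000000000; 364804403837773/250000000000000; 2948735852473091/1000000000000000; 182402201327867/125000000000000; 2948735840153091/1000000000000000; 1459217607729733/1000000000000000].
Definition a (m j : nat) : R := nth j (nth (m mod 10) AL nil) 0.
Definition Y (m j : nat) : R := nth j (nth (m mod 10) YL nil) 0.
Definition Ft (m j : nat) : R := nth j (nth (m mod 10) FL nil) 0.
Definition IL (m : nat) : R := nth (m mod 10) ILL 0.
Definition IH (m : nat) : R := nth (m mod 10) IHL 0.

Ltac cnat := cbv [a Y Ft IL IH AL YL FL ILL IHL ex en exl bx nth Nat.modulo Nat.divmod fst snd Nat.sub Nat.add] in *.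

Lemma lt10 m : (m < 10)%nat -> m = 0%nat \/ m = 1%nat \/ m = 2%nat \/ m = 3%nat \/ m = 4%nat \/ m = 5%nat \/ m = 6%nat \/ m = 7%nat \/ m = 8%nat \/ m = 9%nat.
Proof. lia. Qed.
Ltac c10 H := let E := fresh in destruct (lt10 _ H) as [E|[E|[E|[E|[E|[E|[E|[E|[E|E]]]]]]]]]; subst.

Lemma F_eq : forall m j, (j < 10)%nat -> F m j = Ft m j.
Proof.
  intros m j Hj.
  unfold F, Ft, bx.
  assert (Hm : (m mod 10 < 10)%nat) by (apply Nat.mod_upper_bound; lia).
  generalize (m mod 10) Hm; clear m Hm; intros m Hm.
  c10 Hm; c10 Hj;
  cbv [focal cycle_box mkbox cycle_boxes splus sminus kappa1 kappa2 FL nth Nat.modulo Nat.divmod fst snd Nat.sub Nat.add Nat.mul Nat.div Nat.even]; lra.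
Qed.

Lemma addmod x k : ((x + k) mod 10 = (x mod 10 + k) mod 10)%nat.
Proof. rewrite Nat.Div0.add_mod_idemp_l. reflexivity. Qed.
Lemma Smod m : (S m mod 10 = S (m mod 10) mod 10)%nat.
Proof. replace (S m) with (m + 1)%nat by lia. replace (S (m mod 10)) with (m mod 10 + 1)%nat by lia. apply addmod. Qed.
Lemma S9mod m : ((m + 9) mod 10 = (m mod 10 + 9) mod 10)%nat.
Proof. apply addmod. Qed.
Lemma SS9mod m : ((S m + 9) mod 10 = (S (m mod 10) + 9) mod 10)%nat.
Proof. replace (S m + 9)%nat with (m + 10)%nat by lia. replace (S (m mod 10) + 9)%nat with (m mod 10 + 10)%nat by lia. apply addmod. Qed.

Ltac gen_m m :=
  unfold a, Y, Ft, IL, IH, en, ex, bx in *;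
  rewrite ?(SS9mod m), ?(S9mod m), ?(Smod m) in *;
  repeat match goal with H : context [m] |- _ => revert H end;
  let Hm := fresh "Hm" in
  generalize (Nat.mod_upper_bound m 10 ltac:(lia)); generalize (m mod 10); clear m; intros m Hm; c10 Hm; intros.

Ltac rabs1 := match goal with |- context [Rabs ?x] => (rewrite (Rabs_pos_eq x) by lra) || (rewrite (Rabs_left x) by lra) end.
Ltac rabs := repeat rabs1; rewrite ?Ropp_minus_distr; lra.

Lemma NF_exen m : (ex m < 10)%nat /\ (en m < 10)%nat /\ en m <> ex m /\ en (S m) = ex m.
Proof. gen_m m; cnat; repeat split; lia. Qed.

Lemma NF_bxnext m j : (j < 10)%nat ->
  bx (S m) j = if Nat.eqb j (ex m) then negb (bx m j) else bx m j.
Proof. intros Hj. c10 Hj; gen_m m; cbv [cycle_box mkbox cycle_boxes nth Nat.modulo Nat.divmod fst snd Nat.sub Nat.add exl Nat.eqb negb]; reflexivity. Qed.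

Lemma NF_Fc m : (if bx m (ex m) then Ft m (ex m) < 1/2 else 1/2 < Ft m (ex m)) /\
  (Ft m (ex m) - 1/2 >= 1/2 \/ Ft m (ex m) - 1/2 <= - (1/2)).
Proof. gen_m m; cbv [cycle_box mkbox cycle_boxes]; cnat; lra. Qed.

Lemma NF_Fe m : side (bx m) (en m) (Ft m (en m)).
Proof. unfold side. gen_m m; cbv [cycle_box mkbox cycle_boxes]; cnat; lra. Qed.

Lemma NF_Frange m j : (j < 10)%nat -> 0 <= Ft m j <= 2.
Proof. intros Hj. c10 Hj; gen_m m; cnat; lra. Qed.

Lemma NF_wall m : a m (en m) = 1/2.
Proof. gen_m m; cnat; lra. Qed.

Lemma NF_margin m j : (j < 10)%nat -> j <> en m ->
  if bx m j then 1/2 + 3/20 <= a m j else a m j <= 1/2 - 3/20.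
Proof. intros Hj Hne. c10 Hj; gen_m m; cbv [cycle_box mkbox cycle_boxes]; cnat; try lia; lra. Qed.

Lemma NF_range m j : (j < 10)%nat -> 0 <= a m j - Rr * Y m j /\ a m j + Rr * Y m j <= 2.
Proof. intros Hj. unfold Rr. gen_m m; c10 Hj; cnat; lra. Qed.

Lemma NF_Y m j : (j < 10)%nat -> 1/100 <= Y m j <= 1.
Proof. intros Hj. c10 Hj; gen_m m; cnat; lra. Qed.

Lemma NF_IL m : 7/5 <= IL m /\ IH m <= 3.
Proof. gen_m m; cnat; lra. Qed.

Lemma NF_io m x : a m (ex m) - Rr * Y m (ex m) <= x <= a m (ex m) + Rr * Y m (ex m) ->
  IL m <= (Ft m (ex m) - x) / (Ft m (ex m) - 1/2) <= IH m.
Proof. unfold Rr. gen_m m; cnat; intros; lra. Qed.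

Lemma NF_lip m i : (i < 10)%nat ->
  Y m i / IL m + (Rabs (a m i - Ft m i) + Rr * Y m i) * Y m (ex m)
     / (Rabs (Ft m (ex m) - 1/2) * IL m * IL m) <= th * Y (S m) i.
Proof. intros Hi. unfold Rr, th. c10 Hi; gen_m m; cnat; rabs. Qed.

Lemma NF_into m i : (i < 10)%nat ->
  Rabs (Ft m i + (a m i - Ft m i) / ((Ft m (ex m) - a m (ex m)) / (Ft m (ex m) - 1/2))
        - a (S m) i) <= (1 - th) * (Rr / 2) * Y (S m) i.
Proof. intros Hi. unfold Rr, th. c10 Hi; gen_m m; cnat; rabs. Qed.

Lemma NF_Fhalf m j : (j < 10)%nat -> Ft m j - 1/2 >= 1/2 \/ Ft m j - 1/2 <= - (1/2).
Proof. intros Hj. c10 Hj; gen_m m; cnat; lra. Qed.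


Lemma Rabs_le_iff x b : Rabs x <= b <-> -b <= x <= b.
Proof. unfold Rabs; destruct Rcase_abs; split; intros; lra. Qed.

Lemma Fc_ne m : F m (ex m) - 1/2 <> 0.
Proof. destruct (NF_exen m) as [H _]. rewrite F_eq by exact H.
  destruct (NF_Fc m) as [_ H2]. lra. Qed.

Lemma io_flw m w s : io m (flw m w s) = io m w * exp (- s).
Proof. unfold io, flw. pose proof (Fc_ne m). field. intro E; apply H; lra. Qed.

Lemma Pm_flw m w s j : io m w <> 0 -> Pm m (flw m w s) j = Pm m w j.
Proof. intros H. unfold Pm. rewrite io_flw. unfold flw.
  pose proof (exp_pos (-s)). pose proof (Fc_ne m). unfold io in *.
  assert (F m (ex m) - w (ex m) <> 0).
  { intro E. apply H. rewrite E. unfold Rdiv. ring. }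
  field. repeat split; lra. Qed.

Lemma Pm_ex m w : io m w <> 0 -> Pm m w (ex m) = 1/2.
Proof. intros H. unfold Pm. pose proof (Fc_ne m). unfold io in *.
  assert (F m (ex m) - w (ex m) <> 0).
  { intro E. apply H. rewrite E. unfold Rdiv. ring. }
  field. repeat split; lra. Qed.

Lemma flw_tau m w j : 0 < io m w -> flw m w (ln (io m w)) j = Pm m w j.
Proof. intros H. unfold flw, Pm. rewrite exp_Ropp, exp_ln by exact H.
  field. lra. Qed.

Lemma flw_0 m w j : flw m w 0 j = w j.
Proof. unfold flw. rewrite Ropp_0, exp_0. ring. Qed.

Lemma flw_add m w s u j : flw m (flw m w s) u j = flw m w (s + u) j.
Proof. unfold flw. rewrite Ropp_plus_distr, exp_plus. ring. Qed.

Definition inB (m : nat) (r : R) (w : state) : Prop :=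
  forall j, (j < 10)%nat -> Rabs (w j - a m j) <= r * Y m j.
Definition dB (m : nat) (e : R) (v w : state) : Prop :=
  forall j, (j < 10)%nat -> Rabs (v j - w j) <= e * Y m j.

Lemma io_bounds m w : inB m Rr w -> IL m <= io m w <= IH m.
Proof. intros H. destruct (NF_exen m) as [Hc _].
  unfold io. rewrite F_eq by exact Hc. apply NF_io.
  pose proof (H _ Hc) as H1. apply Rabs_le_iff in H1. lra. Qed.

Lemma lip_gen (Fi Fc wi wc vi vc IL0 yi yc y2 e M : R) :
  Fc - 1/2 <> 0 -> 0 < IL0 ->
  IL0 <= (Fc - wc) / (Fc - 1/2) -> IL0 <= (Fc - vc) / (Fc - 1/2) ->
  Rabs (wi - vi) <= e * yi -> Rabs (wc - vc) <= e * yc -> Rabs (vi - Fi) <= M ->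
  0 <= e -> 0 <= yc ->
  yi / IL0 + M * yc / (Rabs (Fc - 1/2) * IL0 * IL0) <= th * y2 ->
  Rabs ((Fi + (wi - Fi) / ((Fc - wc) / (Fc - 1/2))) -
        (Fi + (vi - Fi) / ((Fc - vc) / (Fc - 1/2)))) <= th * e * y2.
Proof.
  intros Hd HIL HA HB H1 H2 H3 He Hyc Hn.
  set (d := Fc - 1/2) in *.
  set (A := (Fc - wc) / d) in *. set (B := (Fc - vc) / d) in *.
  assert (HA0 : 0 < A) by lra. assert (HB0 : 0 < B) by lra.
  assert (Hwc : Fc - wc <> 0). { intro E. unfold A in HA0. rewrite E in HA0. unfold Rdiv in HA0. lra. }
  assert (Hvc : Fc - vc <> 0). { intro E. unfold B in HB0. rewrite E in HB0. unfold Rdiv in HB0. lra. }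
  assert (E : (Fi + (wi - Fi) / A) - (Fi + (vi - Fi) / B) =
              (wi - vi) * / A + (vi - Fi) * (wc - vc) * / (d * A * B)).
  { unfold A, B. field. repeat split; auto. }
  rewrite E.
  assert (Hd0 : 0 < Rabs d) by (apply Rabs_pos_lt; exact Hd).
  pose proof (Rabs_pos (wi - vi)). pose proof (Rabs_pos (vi - Fi)). pose proof (Rabs_pos (wc - vc)).
  eapply Rle_trans; [apply Rabs_triang|].
  rewrite !Rabs_mult, !Rabs_inv, !Rabs_mult.
  rewrite (Rabs_pos_eq A) by lra. rewrite (Rabs_pos_eq B) by lra.
  assert (T1 : Rabs (wi - vi) * / A <= e * yi * / IL0).
  { apply Rmult_le_compat; try lra. left; apply Rinv_0_lt_compat; lra.
    apply Rinv_le_contravar; lra. }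
  assert (T2 : Rabs (vi - Fi) * Rabs (wc - vc) * / (Rabs d * A * B) <=
               M * (e * yc) * / (Rabs d * IL0 * IL0)).
  { apply Rmult_le_compat.
    - apply Rmult_le_pos; lra.
    - left; apply Rinv_0_lt_compat. apply Rmult_lt_0_compat; [apply Rmult_lt_0_compat|]; lra.
    - apply Rmult_le_compat; lra.
    - apply Rinv_le_contravar.
      + apply Rmult_lt_0_compat; [apply Rmult_lt_0_compat|]; lra.
      + apply Rmult_le_compat; try lra.
        * apply Rmult_le_pos; lra.
        * apply Rmult_le_compat_l; lra. }
  assert (T3 : e * yi * / IL0 + M * (e * yc) * / (Rabs d * IL0 * IL0) =
               e * (yi / IL0 + M * yc / (Rabs d * IL0 * IL0))).
  { field. split; lra. }
  assert (T4 : e * (yi / IL0 + M * yc / (Rabs d * IL0 * IL0)) <= e * (th * y2)).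
  { apply Rmult_le_compat_l; lra. }
  lra.
Qed.

Lemma Y_pos m j : (j < 10)%nat -> 0 < Y m j.
Proof. intros H. destruct (NF_Y m j H). lra. Qed.
Lemma Rr_pos : 0 < Rr.
Proof. unfold Rr; lra. Qed.
Lemma th_pos : 0 < th.
Proof. unfold th; lra. Qed.

Lemma lip m w w' e : inB m Rr w -> inB m Rr w' -> 0 <= e -> dB m e w w' ->
  dB (S m) (th * e) (Pm m w) (Pm m w').
Proof.
  intros Hw Hw' He Hd i Hi.
  destruct (NF_exen m) as [Hc _].
  pose proof (io_bounds m w Hw) as [I1 _]. pose proof (io_bounds m w' Hw') as [I2 _].
  pose proof (NF_IL m) as [I3 _].
  unfold Pm, io in *. rewrite !F_eq in * by assumption.
  apply lip_gen with (IL0 := IL m) (yi := Y m i) (yc := Y m (ex m)) (M := Rabs (a m i - Ft m i) + Rr * Y m i).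
  - rewrite <- F_eq by exact Hc. apply Fc_ne.
  - lra.
  - exact I1.
  - exact I2.
  - apply Hd; exact Hi.
  - apply Hd; exact Hc.
  - replace (w' i - Ft m i) with ((w' i - a m i) + (a m i - Ft m i)) by ring.
    eapply Rle_trans; [apply Rabs_triang|]. pose proof (Hw' i Hi). lra.
  - exact He.
  - left; apply Y_pos; exact Hc.
  - apply NF_lip; exact Hi.
Qed.

Lemma inB_dB m r w : inB m r w -> dB m r w (fun j => a m j).
Proof. intros H j Hj. apply H. exact Hj. Qed.

Lemma a_inB m r : 0 <= r -> inB m r (fun j => a m j).
Proof. intros Hr j Hj. unfold Rminus. rewrite Rplus_opp_r, Rabs_R0.
  apply Rmult_le_pos; [lra| left; apply Y_pos; exact Hj]. Qed.

Lemma into m r w : Rr / 2 <= r <= Rr -> inB m r w -> inB (S m) r (Pm m w).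
Proof.
  intros Hr Hw i Hi.
  assert (HwR : inB m Rr w).
  { intros j Hj. pose proof (Hw j Hj). pose proof (Y_pos m j Hj).
    eapply Rle_trans; [exact H|]. apply Rmult_le_compat_r; lra. }
  assert (HaR : inB m Rr (fun j => a m j)) by (apply a_inB; pose Rr_pos; lra).
  assert (r0 : 0 <= r) by (pose Rr_pos; lra).
  pose proof (lip m w (fun j => a m j) r HwR HaR r0 (inB_dB m r w Hw) i Hi) as L.
  pose proof (NF_into m i Hi) as N.
  destruct (NF_exen m) as [Hc _].
  assert (E : Pm m (fun j => a m j) i =
     Ft m i + (a m i - Ft m i) / ((Ft m (ex m) - a m (ex m)) / (Ft m (ex m) - 1/2))).
  { unfold Pm, io. rewrite !F_eq by assumption. reflexivity. }
  rewrite <- E in N.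
  replace (Pm m w i - a (S m) i) with ((Pm m w i - Pm m (fun j => a m j) i) + (Pm m (fun j => a m j) i - a (S m) i)) by ring.
  eapply Rle_trans; [apply Rabs_triang|].
  pose proof (Y_pos (S m) i Hi). pose proof th_pos. unfold th in *.
  assert ((1 - 4/5) * (Rr / 2) * Y (S m) i <= (1 - 4/5) * r * Y (S m) i).
  { apply Rmult_le_compat_r; [lra|]. apply Rmult_le_compat_l; lra. }
  nra.
Qed.


Lemma side_inbox b v : (forall j, (j < 10)%nat -> side b j (v j)) -> in_box b v.
Proof. intros H j Hj. specialize (H j Hj). unfold side in H.
  destruct (b j); split; try split; intros; try lra; try discriminate. Qed.

Lemma inbox_side b v : in_box b v -> forall j, (j < 10)%nat -> side b j (v j).
Proof. intros H j Hj. destruct (H j Hj) as [H1 H2]. unfold side.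
  destruct (b j).
  - destruct (Rlt_dec (1/2) (v j)); [auto|]. exfalso.
    assert (Ht : true = true) by reflexivity. apply H2 in Ht. contradiction.
  - destruct (Rlt_dec (1/2) (v j)) as [r|r].
    + apply H2 in r. discriminate.
    + lra.
Qed.

Lemma side_wside b j x : side b j x -> wside b j x.
Proof. unfold side, wside. destruct (b j); lra. Qed.

Lemma margin_side m j x : (j < 10)%nat -> j <> en m -> Rabs (x - a m j) <= 1/10 -> side (bx m) j x.
Proof. intros Hj Hne Hx. pose proof (NF_margin m j Hj Hne). apply Rabs_le_iff in Hx.
  unfold side. destruct (bx m j); lra. Qed.

Lemma exp_lt1 u : 0 < u -> exp (- u) < 1.
Proof. intros H. rewrite <- exp_0. apply exp_increasing. lra. Qed.

Lemma PV m w : 1 < io m w ->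
  (forall j, (j < 10)%nat -> j <> ex m -> wside (bx m) j (w j)) ->
  (forall j, (j < 10)%nat -> j <> ex m -> side (bx m) j (Pm m w j)) ->
  side (bx m) (ex m) (w (ex m)) ->
  forall u, 0 < u < ln (io m w) -> in_box (bx m) (flw m w u).
Proof.
  intros Hio Hw HP Hc u Hu. apply side_inbox. intros j Hj.
  set (i := io m w) in *.
  assert (He1 : exp (- u) < 1) by (apply exp_lt1; lra).
  assert (He2 : / i < exp (- u)).
  { replace (/ i) with (exp (- ln i)) by (rewrite exp_Ropp, exp_ln; lra).
    apply exp_increasing. lra. }
  assert (Hi0 : 0 < / i) by (apply Rinv_0_lt_compat; lra).
  assert (Hi1 : / i < 1) by (rewrite <- Rinv_1; apply Rinv_lt_contravar; lra).
  destruct (Nat.eq_dec j (ex m)) as [->|Hne].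
  - assert (Hd := Fc_ne m).
    assert (Ew : w (ex m) - 1/2 = (F m (ex m) - 1/2) * (1 - i)).
    { unfold i, io. field. lra. }
    assert (Ef : flw m w u (ex m) - 1/2 = (F m (ex m) - 1/2) * (1 - i * exp (-u))).
    { unfold flw, i, io. field. lra. }
    set (D := F m (ex m) - 1/2) in *.
    assert (Hie : 1 < i * exp (- u)).
    { apply (Rmult_lt_compat_l i) in He2; [|lra]. rewrite Rinv_r in He2; lra. }
    unfold side in *. destruct (bx m (ex m)).
    + assert (D < 0) by nra. nra.
    + assert (D > 0) by nra. nra.
  - specialize (Hw j Hj Hne). specialize (HP j Hj Hne).
    set (lam := (exp (- u) - / i) / (1 - / i)).
    assert (Hl0 : 0 < lam) by (unfold lam; apply Rdiv_lt_0_compat; lra).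
    assert (Hl1 : lam < 1) by (unfold lam; apply (Rmult_lt_reg_r (1 - / i)); [lra|]; unfold Rdiv; rewrite Rmult_assoc, Rinv_l by lra; lra).
    assert (E : flw m w u j - 1/2 = (1 - lam) * (Pm m w j - 1/2) + lam * (w j - 1/2)).
    { unfold lam, flw, Pm. fold i. field. split; lra. }
    unfold side, wside in *. destruct (bx m j); nra.
Qed.

Notation foc b j := (focal kappa1 kappa2 b j).

Definition enters (b : box) (q : state) : Prop :=
  forall j, (j < 10)%nat -> side b j (q j) \/
    (q j = 1/2 /\ side b j (foc b j) /\ forall i, (i < 10)%nat -> i <> j -> side b i (q i)).

Lemma focal_indep b b' j : (j < 10)%nat -> (forall i, (i < 10)%nat -> i <> j -> b' i = b i) ->
  foc b' j = foc b j.
Proof.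
  intros Hj H. c10 Hj;
  cbv [focal Nat.modulo Nat.divmod fst snd Nat.sub Nat.add Nat.mul Nat.div Nat.even];
  repeat rewrite H by lia; reflexivity.
Qed.

Lemma in_box_ext b v w : (forall j, (j < 10)%nat -> v j = w j) -> in_box b v -> in_box b w.
Proof. intros E H j Hj. rewrite <- E by exact Hj. apply H; exact Hj. Qed.

Lemma sides_eq b b' j x y : side b j x -> side b' j y -> (x - 1/2) * (y - 1/2) > 0 -> b' j = b j.
Proof. unfold side. destruct (b j), (b' j); auto; intros; nra. Qed.

Lemma one_minus_exp u : 0 <= u -> 0 <= 1 - exp (- u) <= u.
Proof. intros Hu. split.
  - destruct (Req_dec u 0) as [->|Hn]. rewrite Ropp_0, exp_0; lra.
    pose proof (exp_lt1 u). lra.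
  - pose proof (exp_ineq1_le (- u)). lra. Qed.

Lemma bits_from_start b b' r g : 0 < g ->
  (forall u, 0 < u < g -> in_box b' (fun j => foc b' j + (r j - foc b' j) * exp (- u))) ->
  enters b r -> forall j, (j < 10)%nat -> b' j = b j.
Proof.
  intros Hg Hbox Hen.
  assert (S1 : forall j, (j < 10)%nat -> side b j (r j) -> b' j = b j).
  { intros j Hj Hs.
    set (x := r j) in *. set (F' := foc b' j).
    assert (Hd : 0 < Rabs (x - 1/2)).
    { apply Rabs_pos_lt. unfold side in Hs. destruct (b j); lra. }
    set (d := Rabs (x - 1/2)) in *.
    pose proof (Rabs_pos (x - F')).
    set (u := Rmin (g / 2) (d / (2 * (Rabs (x - F') + 1)))).
    assert (Hu0 : 0 < u).
    { unfold u. apply Rmin_glb_lt; [lra|]. apply Rdiv_lt_0_compat; lra. }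
    assert (Hu1 : u < g). { unfold u. pose proof (Rmin_l (g/2) (d / (2 * (Rabs (x - F') + 1)))). lra. }
    assert (Hu2 : u * (2 * (Rabs (x - F') + 1)) <= d).
    { unfold u. pose proof (Rmin_r (g/2) (d / (2 * (Rabs (x - F') + 1)))).
      apply (Rmult_le_compat_r (2 * (Rabs (x - F') + 1))) in H0; [|lra].
      unfold Rdiv in H0. rewrite Rmult_assoc, Rinv_l in H0 by lra. lra. }
    specialize (Hbox u (conj Hu0 Hu1)).
    pose proof (inbox_side _ _ Hbox j Hj) as Hs'. simpl in Hs'. fold F' in Hs'. fold x in Hs'.
    apply (sides_eq b b' j x _ Hs Hs').
    pose proof (one_minus_exp u (Rlt_le _ _ Hu0)) as [E1 E2].
    set (y := F' + (x - F') * exp (- u)) in *.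
    assert (Hyx : Rabs (y - x) <= Rabs (x - F') * u).
    { unfold y. replace (F' + (x - F') * exp (- u) - x) with (- ((x - F') * (1 - exp (- u)))) by ring.
      rewrite Rabs_Ropp, Rabs_mult, (Rabs_pos_eq (1 - exp (- u))) by lra.
      apply Rmult_le_compat_l; lra. }
    assert (Hlt : Rabs (y - x) < d) by nra.
    unfold d in *. apply Rabs_le_iff in Hyx.
    destruct (Rle_dec 0 (x - 1/2)).
    - rewrite (Rabs_pos_eq (x - 1/2)) in Hlt, Hd by lra.
      apply Rabs_def2 in Hlt as [Hl1 Hl2]. apply Rmult_lt_0_compat; lra.
    - rewrite (Rabs_left (x - 1/2)) in Hlt, Hd by lra.
      apply Rabs_def2 in Hlt as [Hl1 Hl2].
      replace ((x - 1/2) * (y - 1/2)) with ((1/2 - x) * (1/2 - y)) by ring.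
      apply Rmult_lt_0_compat; lra. }
  intros j Hj. destruct (Hen j Hj) as [Hs|[Hq [HF Ho]]].
  - apply S1; assumption.
  - assert (Hf : foc b' j = foc b j).
    { apply focal_indep; [exact Hj|]. intros i Hi Hne. apply S1; [exact Hi|]. apply Ho; assumption. }
    specialize (Hbox (g/2) ltac:(lra)).
    pose proof (inbox_side _ _ Hbox j Hj) as Hs'. simpl in Hs'.
    rewrite Hf, Hq in Hs'.
    apply (sides_eq b b' j (foc b j) _ HF Hs').
    pose proof (exp_lt1 (g/2) ltac:(lra)).
    replace (foc b j + (1/2 - foc b j) * exp (- (g/2)) - 1/2) with ((foc b j - 1/2) * (1 - exp (- (g/2)))) by ring.
    assert (0 < (foc b j - 1/2) * (foc b j - 1/2)).
    { assert (foc b j - 1/2 <> 0) by (unfold side in HF; destruct (b j); lra). nra. }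
    nra.
Qed.

Lemma enters_ext b q r : (forall j, (j < 10)%nat -> r j = q j) -> enters b q -> enters b r.
Proof. intros E H j Hj. rewrite E by exact Hj. destruct (H j Hj) as [A|[A1 [A2 A3]]]; [left; exact A|right].
  split; [exact A1|split; [exact A2|]]. intros i Hi Hne. rewrite E by exact Hi. apply A3; assumption. Qed.

Lemma uniq h n ts bs T' s b q sg :
  traj_pieces kappa1 kappa2 h n ts bs T' -> 0 <= s -> 0 < sg ->
  (forall j, (j < 10)%nat -> h s j = q j) -> enters b q ->
  (forall u, 0 < u < sg -> in_box b (fun j => foc b j + (q j - foc b j) * exp (- u))) ->
  forall t, s <= t <= T' -> t <= s + sg ->
  forall j, (j < 10)%nat -> h t j = foc b j + (q j - foc b j) * exp (- (t - s)).
Proof.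
  intros [H0 [Hn [Hinc Hpc]]] Hs Hsg Hq Hen Hy.
  assert (Cl : forall m, (m <= n)%nat -> forall t, s <= t <= ts m -> t <= s + sg ->
     forall j, (j < 10)%nat -> h t j = foc b j + (q j - foc b j) * exp (- (t - s))).
  { induction m as [|m IH]; intros Hm t Ht Hts j Hj.
    - rewrite H0 in Ht. assert (t = s) by lra. subst t.
      rewrite Rminus_diag, Ropp_0, exp_0, Hq by exact Hj. ring.
    - destruct (Rle_dec t (ts m)) as [Hle|Hgt].
      + apply IH; try lia; lra.
      + assert (Hmn : (m < n)%nat) by lia.
        destruct (Hpc m Hmn t ltac:(lra)) as [Ft _].
        destruct (Rle_dec s (ts m)) as [Hsm|Hsm].
        *
          set (r := h (ts m)).
          assert (Hr : forall j, (j < 10)%nat -> r j = foc b j + (q j - foc b j) * exp (- (ts m - s))).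
          { intros j0 Hj0. apply IH; try lia; lra. }
          assert (Hent : enters b r).
          { destruct (Req_dec (ts m) s) as [E|E].
            - apply (enters_ext b q r); [|exact Hen].
              intros j0 Hj0. rewrite Hr by exact Hj0. rewrite E, Rminus_diag, Ropp_0, exp_0. ring.
            - intros j0 Hj0. left.
              assert (Hb := Hy (ts m - s) ltac:(lra)).
              pose proof (inbox_side _ _ Hb j0 Hj0) as Hsd. simpl in Hsd.
              rewrite Hr by exact Hj0. exact Hsd. }
          assert (Hg : 0 < ts (S m) - ts m) by (apply Rlt_Rminus; apply Hinc; exact Hmn).
          assert (Hbits : forall j, (j < 10)%nat -> bs m j = b j).
          { apply (bits_from_start b (bs m) r (ts (S m) - ts m) Hg); [|exact Hent].
            intros u Hu. destruct (Hpc m Hmn (ts m + u) ltac:(lra)) as [Fu Bu].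
            apply (in_box_ext _ (h (ts m + u))).
            - intros j0 Hj0. rewrite Fu by exact Hj0. fold r.
              replace (ts m + u - ts m) with u by ring. reflexivity.
            - apply Bu. lra. }
          assert (Hf : forall j, (j < 10)%nat -> foc (bs m) j = foc b j).
          { intros j0 Hj0. apply focal_indep; [exact Hj0|]. intros i Hi _. apply Hbits; exact Hi. }
          rewrite Ft by exact Hj. rewrite Hf by exact Hj. fold r. rewrite Hr by exact Hj.
          replace (- (t - s)) with (- (ts m - s) + - (t - ts m)) by ring.
          rewrite exp_plus. ring.
        *
          apply Rnot_le_lt in Hsm. apply Rnot_le_lt in Hgt.
          destruct (Req_dec t s) as [Ets|Ets].
          { subst t. rewrite Rminus_diag, Ropp_0, exp_0, Hq by exact Hj. ring. }
          assert (Hst : s < t) by lra.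
          assert (Hbq : in_box (bs m) (h s)).
          { destruct (Hpc m Hmn s ltac:(lra)) as [_ Bs]. apply Bs. lra. }
          assert (Hbits : forall j, (j < 10)%nat -> bs m j = b j).
          { intros j0 Hj0. destruct (Hbq j0 Hj0) as [Hne _].
            rewrite Hq in Hne by exact Hj0.
            destruct (Hen j0 Hj0) as [Hs0|[Hq0 _]]; [|contradiction].
            pose proof (inbox_side _ _ Hbq j0 Hj0) as Hs1. rewrite Hq in Hs1 by exact Hj0.
            apply (sides_eq b (bs m) j0 (q j0) (q j0) Hs0 Hs1).
            assert (q j0 - 1/2 <> 0) by lra. nra. }
          assert (Hf : forall j, (j < 10)%nat -> foc (bs m) j = foc b j).
          { intros j0 Hj0. apply focal_indep; [exact Hj0|]. intros i Hi _. apply Hbits; exact Hi. }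
          destruct (Hpc m Hmn s ltac:(lra)) as [Fs _].
          pose proof (Fs j Hj) as E1. rewrite Hq in E1 by exact Hj.
          rewrite Ft by exact Hj. rewrite Hf in E1 |- * by exact Hj. rewrite E1.
          replace (- (t - ts m)) with (- (s - ts m) + - (t - s)) by ring.
          rewrite exp_plus. ring. }
  intros t Ht Hts j Hj. apply (Cl n (le_n n) t); try lra. exact Hj.
Qed.


Fixpoint it (k : nat) (w : state) : state :=
  match k with O => w | S k' => Pm k' (it k' w) end.

Lemma inB_weaken m r r' w : r <= r' -> inB m r w -> inB m r' w.
Proof. intros Hr H j Hj. eapply Rle_trans; [apply H; exact Hj|].
  apply Rmult_le_compat_r; [left; apply Y_pos; exact Hj| exact Hr]. Qed.

Lemma it_inB r w : Rr / 2 <= r <= Rr -> inB 0 r w -> forall k, inB k r (it k w).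
Proof. intros Hr H k. induction k as [|k IH]; simpl; [exact H|]. apply into; assumption. Qed.

Lemma it_lip w w' e : inB 0 Rr w -> inB 0 Rr w' -> 0 <= e -> dB 0 e w w' ->
  forall k, dB k (th ^ k * e) (it k w) (it k w').
Proof.
  intros Hw Hw' He Hd k. induction k as [|k IH]; simpl.
  - rewrite Rmult_1_l. exact Hd.
  - rewrite Rmult_assoc. apply lip.
    + apply it_inB; [pose Rr_pos; lra|exact Hw].
    + apply it_inB; [pose Rr_pos; lra|exact Hw'].
    + apply Rmult_le_pos; [apply pow_le; pose th_pos; lra|exact He].
    + exact IH.
Qed.

Definition a0 : state := fun j => a 0 j.

Fixpoint xs (n : nat) : state := match n with O => a0 | S n' => it 10 (xs n') end.

Definition qq : R := th ^ 10.

Lemma qq_bounds : 0 < qq < 1.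
Proof. unfold qq, th. simpl. lra. Qed.

Lemma xs_inB n : inB 0 (Rr / 2) (xs n).
Proof. induction n as [|n IH]; simpl.
  - apply a_inB. pose Rr_pos; lra.
  - apply (it_inB (Rr/2) (xs n) ltac:(pose Rr_pos; lra) IH 10). Qed.

Lemma dB_of_inB m r w w' : inB m r w -> inB m r w' -> dB m (2 * r) w w'.
Proof. intros H H' j Hj. pose proof (H j Hj). pose proof (H' j Hj).
  replace (w j - w' j) with ((w j - a m j) - (w' j - a m j)) by ring.
  eapply Rle_trans; [apply Rabs_triang|]. rewrite Rabs_Ropp. lra. Qed.

Lemma xs_step n : dB 0 (qq ^ n * Rr) (xs n) (xs (S n)).
Proof.
  induction n as [|n IH].
  - simpl. rewrite Rmult_1_l. replace Rr with (2 * (Rr / 2)) by field.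
    apply dB_of_inB; [apply (xs_inB 0)| apply (xs_inB 1)].
  - change (xs (S (S n))) with (it 10 (xs (S n))). change (xs (S n)) with (it 10 (xs n)) at 1.
    assert (H := it_lip (xs n) (xs (S n)) (qq ^ n * Rr)
      (inB_weaken 0 (Rr/2) Rr (xs n) ltac:(pose Rr_pos; lra) (xs_inB n))
      (inB_weaken 0 (Rr/2) Rr (xs (S n)) ltac:(pose Rr_pos; lra) (xs_inB (S n)))
      ltac:(apply Rmult_le_pos; [apply pow_le; pose qq_bounds; lra| pose Rr_pos; lra]) IH 10).
    intros j Hj. specialize (H j Hj). change (Y 10 j) with (Y 0 j) in H.
    change (qq ^ S n) with (qq * qq ^ n). unfold qq in *. replace (th ^ 10 * (th ^ 10) ^ n * Rr * Y 0 j) with (th ^ 10 * ((th ^ 10) ^ n * Rr) * Y 0 j) by ring. exact H.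
Qed.

Lemma xs_cauchy_bound n k j : (j < 10)%nat ->
  Rabs (xs n j - xs (n + k) j) <= Rr * qq ^ n * (1 - qq ^ k) / (1 - qq).
Proof.
  intros Hj. pose proof qq_bounds as Hq. pose proof Rr_pos.
  induction k as [|k IH].
  - rewrite Nat.add_0_r, Rminus_diag, Rabs_R0. simpl. unfold Rdiv. rewrite Rminus_diag. lra.
  - replace (xs n j - xs (n + S k) j) with ((xs n j - xs (n + k) j) + (xs (n + k) j - xs (S (n + k)) j))
      by (rewrite Nat.add_succ_r; ring).
    eapply Rle_trans; [apply Rabs_triang|].
    pose proof (xs_step (n + k) j Hj) as H1.
    pose proof (NF_Y 0 j Hj) as [_ HY].
    assert (H2 : qq ^ (n + k) * Rr * Y 0 j <= qq ^ (n + k) * Rr).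
    { pose proof (pow_le qq (n+k) ltac:(lra)). rewrite <- (Rmult_1_r (qq ^ (n+k) * Rr)) at 2. apply Rmult_le_compat_l; [apply Rmult_le_pos; lra | lra]. }
    rewrite pow_add in H1, H2.
    assert (E : Rr * qq ^ n * (1 - qq ^ k) / (1 - qq) + qq ^ n * qq ^ k * Rr =
                Rr * qq ^ n * (1 - qq ^ S k) / (1 - qq)).
    { simpl. field. lra. }
    lra.
Qed.

Lemma xs_cauchy j : (j < 10)%nat -> Cauchy_crit (fun n => xs n j).
Proof.
  intros Hj eps Heps. pose proof qq_bounds as Hq. pose proof Rr_pos.
  destruct (pow_lt_1_zero qq ltac:(rewrite Rabs_pos_eq; lra) (eps * (1 - qq) / (2 * Rr))
     ltac:(apply Rdiv_lt_0_compat; nra)) as [N HN].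
  exists N. intros n m Hn Hm. unfold R_dist.
  assert (Hb : forall n k, (N <= n)%nat -> Rabs (xs n j - xs (n + k) j) < eps).
  { intros n0 k Hn0. eapply Rle_lt_trans; [apply xs_cauchy_bound; exact Hj|].
    specialize (HN n0 Hn0). rewrite Rabs_pos_eq in HN by (apply pow_le; lra).
    pose proof (pow_le qq k ltac:(lra)). pose proof (pow_le qq n0 ltac:(lra)).
    apply (Rmult_lt_compat_l (2 * Rr)) in HN; [|lra].
    replace (2 * Rr * (eps * (1 - qq) / (2 * Rr))) with (eps * (1 - qq)) in HN by (field; lra).
    assert (A1 : Rr * qq ^ n0 * (1 - qq ^ k) <= Rr * qq ^ n0).
    { assert (0 <= Rr * qq ^ n0) by (apply Rmult_le_pos; lra).
      rewrite <- (Rmult_1_r (Rr * qq ^ n0)) at 2. apply Rmult_le_compat_l; lra. }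
    apply (Rmult_lt_reg_r (1 - qq)); [lra|].
    replace (Rr * qq ^ n0 * (1 - qq ^ k) / (1 - qq) * (1 - qq)) with (Rr * qq ^ n0 * (1 - qq ^ k)) by (field; lra).
    assert (0 <= Rr * qq ^ n0) by (apply Rmult_le_pos; lra). lra. }
  destruct (Nat.le_ge_cases n m) as [Hnm|Hnm].
  - replace m with (n + (m - n))%nat by lia. apply Hb; exact Hn.
  - replace n with (m + (n - m))%nat by lia. rewrite <- Rabs_Ropp, Ropp_minus_distr. apply Hb; exact Hm.
Qed.

Definition z0 : state := fun j =>
  match lt_dec j 10 with
  | left H => proj1_sig (R_complete _ (xs_cauchy j H))
  | right _ => 0
  end.

Lemma z0_cv j : (j < 10)%nat -> Un_cv (fun n => xs n j) (z0 j).
Proof. intros Hj. unfold z0. destruct (lt_dec j 10) as [H|H]; [|lia].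
  destruct (R_complete _ (xs_cauchy j H)) as [l Hl]. simpl. exact Hl. Qed.

Lemma cv_bounds u l lo hi : Un_cv u l -> (forall n, lo <= u n <= hi) -> lo <= l <= hi.
Proof.
  intros Hc Hb. split.
  - destruct (Rle_dec lo l) as [?|Hn]; [assumption|]. exfalso.
    destruct (Hc (lo - l) ltac:(lra)) as [N HN]. specialize (HN N (le_n N)). specialize (Hb N).
    unfold R_dist in HN. apply Rabs_def2 in HN. lra.
  - destruct (Rle_dec l hi) as [?|Hn]; [assumption|]. exfalso.
    destruct (Hc (l - hi) ltac:(lra)) as [N HN]. specialize (HN N (le_n N)). specialize (Hb N).
    unfold R_dist in HN. apply Rabs_def2 in HN. lra.
Qed.

Lemma z0_inB : inB 0 (Rr / 2) z0.
Proof.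
  intros j Hj. apply Rabs_le_iff.
  assert (H := cv_bounds (fun n => xs n j) (z0 j) (a 0 j - Rr / 2 * Y 0 j) (a 0 j + Rr / 2 * Y 0 j) (z0_cv j Hj)).
  cut (a 0 j - Rr / 2 * Y 0 j <= z0 j <= a 0 j + Rr / 2 * Y 0 j); [lra|]. apply H.
  intros n. pose proof (xs_inB n j Hj) as X. apply Rabs_le_iff in X. lra.
Qed.

Lemma fin_ev (P : nat -> nat -> Prop) K :
  (forall j, (j < K)%nat -> exists N, forall n, (N <= n)%nat -> P j n) ->
  exists N, forall n, (N <= n)%nat -> forall j, (j < K)%nat -> P j n.
Proof.
  induction K as [|K IH]; intros H.
  - exists 0%nat. intros; lia.
  - destruct IH as [N1 H1]. { intros j Hj. apply H. lia. }
    destruct (H K ltac:(lia)) as [N2 H2]. exists (Nat.max N1 N2). intros n Hn j Hj.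
    destruct (Nat.eq_dec j K) as [->|Hne]. apply H2; lia. apply H1; lia.
Qed.

Lemma eq_of_small x y : (forall e, 0 < e -> Rabs (x - y) <= e) -> x = y.
Proof. intros H. destruct (Req_dec x y) as [?|Hn]; [assumption|]. exfalso.
  assert (0 < Rabs (x - y)) by (apply Rabs_pos_lt; lra).
  specialize (H (Rabs (x - y) / 2) ltac:(lra)). lra. Qed.

Lemma z0_fixed j : (j < 10)%nat -> it 10 z0 j = z0 j.
Proof.
  intros Hj. apply eq_of_small. intros e He.
  destruct (fin_ev (fun j n => Rabs (xs n j - z0 j) < e / 400) 10) as [N HN].
  { intros j0 Hj0. destruct (z0_cv j0 Hj0 (e / 400) ltac:(lra)) as [N HN]. exists N.
    intros n Hn. apply HN. lia. }
  assert (Hd : dB 0 (e / 2) z0 (xs N)).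
  { intros j0 Hj0. specialize (HN N (le_n N) j0 Hj0). rewrite <- Rabs_Ropp, Ropp_minus_distr.
    pose proof (NF_Y 0 j0 Hj0). nra. }
  assert (L := it_lip z0 (xs N) (e / 2) (inB_weaken 0 (Rr/2) Rr z0 ltac:(pose Rr_pos; lra) z0_inB)
     (inB_weaken 0 (Rr/2) Rr (xs N) ltac:(pose Rr_pos; lra) (xs_inB N)) ltac:(lra) Hd 10 j Hj).
  change (it 10 (xs N)) with (xs (S N)) in L. change (Y 10 j) with (Y 0 j) in L.
  pose proof (HN (S N) ltac:(lia) j Hj).
  pose proof (NF_Y 0 j Hj). pose proof (pow_le th 10 ltac:(pose th_pos; lra)).
  assert (th ^ 10 <= 1) by (unfold th; simpl; lra).
  assert (th ^ 10 * (e / 2) * Y 0 j <= e / 2).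
  { apply Rle_trans with (1 * (e/2) * 1); [|lra]. apply Rmult_le_compat; try nra. }
  replace (it 10 z0 j - z0 j) with ((it 10 z0 j - xs (S N) j) + (xs (S N) j - z0 j)) by ring.
  eapply Rle_trans; [apply Rabs_triang|]. lra.
Qed.


Lemma Pm_ext m v w : (forall j, (j < 10)%nat -> v j = w j) -> forall j, (j < 10)%nat -> Pm m v j = Pm m w j.
Proof. intros E j Hj. destruct (NF_exen m) as [Hc _]. unfold Pm, io. rewrite !E by assumption. reflexivity. Qed.

Lemma md10 m : ((m + 10) mod 10 = m mod 10)%nat.
Proof. replace (m + 10)%nat with (m + 1 * 10)%nat by lia. apply Nat.Div0.mod_add. Qed.

Lemma F_per m j : F (m + 10) j = F m j.
Proof. unfold F, bx. rewrite md10. reflexivity. Qed.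
Lemma ex_per m : ex (m + 10) = ex m.
Proof. unfold ex. rewrite md10. reflexivity. Qed.
Lemma Pm_per m w j : Pm (m + 10) w j = Pm m w j.
Proof. unfold Pm, io. rewrite ?F_per, ?ex_per. reflexivity. Qed.

Definition zz (k : nat) : state := it k z0.

Lemma zz_inB k : inB k (Rr / 2) (zz k).
Proof. apply it_inB; [pose Rr_pos; lra|exact z0_inB]. Qed.

Lemma zz_per k j : (j < 10)%nat -> zz (k + 10) j = zz k j.
Proof.
  revert j. induction k as [|k IH]; intros j Hj.
  - apply z0_fixed; exact Hj.
  - unfold zz in *. simpl. rewrite Pm_per. apply Pm_ext; assumption.
Qed.

Lemma zz_mod k j : (j < 10)%nat -> zz k j = zz (k mod 10) j.
Proof.
  intros Hj. rewrite (Nat.div_mod_eq k 10) at 1.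
  generalize (k / 10)%nat. intros q. induction q as [|q IH].
  - rewrite Nat.mul_0_r, Nat.add_0_l. reflexivity.
  - replace (10 * S q + k mod 10)%nat with ((10 * q + k mod 10) + 10)%nat by lia.
    rewrite zz_per by exact Hj. exact IH.
Qed.

Lemma io_gt1 m w : inB m Rr w -> 1 < io m w.
Proof. intros H. pose proof (io_bounds m w H). pose proof (NF_IL m). lra. Qed.

Lemma zz_io k : 1 < io k (zz k).
Proof. apply io_gt1. apply (inB_weaken k (Rr/2)); [pose Rr_pos; lra|apply zz_inB]. Qed.

Lemma zz_wall k : zz k (en k) = 1/2.
Proof.
  destruct k as [|k].
  - destruct (NF_exen 9) as [_ [_ [_ E]]].
    rewrite (zz_mod 0) by (apply NF_exen). change (0 mod 10)%nat with 0%nat.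
    rewrite <- (zz_per 0) by (apply NF_exen). simpl (0 + 10)%nat.
    change (en 0) with (en 10). rewrite E. unfold zz. change (it 10 z0) with (Pm 9 (it 9 z0)).
    apply Pm_ex. pose proof (zz_io 9). unfold zz in H. lra.
  - destruct (NF_exen k) as [_ [_ [_ E]]]. rewrite E. unfold zz. simpl.
    apply Pm_ex. pose proof (zz_io k). unfold zz in H. lra.
Qed.

Definition tau (k : nat) : R := ln (io k (zz k)).
Fixpoint tsf (k : nat) : R := match k with O => 0 | S k' => tsf k' + tau k' end.
Definition T0 : R := tsf 10.

Lemma ln_pos_gt1 x : 1 < x -> 0 < ln x.
Proof. intros H. rewrite <- ln_1. apply ln_increasing; lra. Qed.

Lemma tau_pos k : 0 < tau k.
Proof. apply ln_pos_gt1, zz_io. Qed.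

Lemma tsf_lt k : tsf k < tsf (S k).
Proof. simpl. pose proof (tau_pos k). lra. Qed.

Lemma tsf_mono a b : (a < b)%nat -> tsf (S a) <= tsf b.
Proof. intros H. induction b as [|b IH]; [lia|].
  destruct (Nat.eq_dec a b) as [->|Hne]; [lra|]. pose proof (tsf_lt b). specialize (IH ltac:(lia)). lra. Qed.

Lemma tsf_le a b : (a <= b)%nat -> tsf a <= tsf b.
Proof. intros H. destruct (Nat.eq_dec a b) as [->|Hne]; [lra|].
  pose proof (tsf_mono a b ltac:(lia)). pose proof (tsf_lt a). lra. Qed.

Lemma tsf_nonneg k : 0 <= tsf k.
Proof. apply (tsf_le 0 k). lia. Qed.

Lemma idx_unique m m' t : tsf m <= t <= tsf (S m) -> tsf m' <= t < tsf (S m') ->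
  m' = m \/ (m' = S m /\ t = tsf (S m)).
Proof.
  intros H1 H2. destruct (lt_eq_lt_dec m' m) as [[Hlt|Heq]|Hgt].
  - exfalso. pose proof (tsf_mono m' m Hlt). lra.
  - left; exact Heq.
  - destruct (Nat.eq_dec m' (S m)) as [->|Hne].
    + right. split; [reflexivity|lra].
    + exfalso. pose proof (tsf_mono (S m) m' ltac:(lia)). pose proof (tsf_lt (S m)). lra.
Qed.

Definition gidx (t : R) : nat :=
  epsilon (inhabits 0%nat) (fun m => (m < 10)%nat /\ tsf m <= t < tsf (S m)).

Definition gg (t : R) : state := fun j =>
  if Nat.ltb j 10 then
    (if Rlt_dec t T0 then flw (gidx t) (zz (gidx t)) (t - tsf (gidx t)) j
     else flw 9 (zz 9) (t - tsf 9) j)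
  else 0.

Lemma exists_idx t : 0 <= t < T0 -> exists m, (m < 10)%nat /\ tsf m <= t < tsf (S m).
Proof.
  intros [H0 H1]. unfold T0 in H1.
  assert (G : forall N, t < tsf N -> exists m, (m < N)%nat /\ tsf m <= t < tsf (S m)).
  { induction N as [|N IH]; intros HN. simpl in HN; lra.
    destruct (Rlt_dec t (tsf N)) as [L|L].
    - destruct (IH L) as [m [Hm1 Hm2]]. exists m. split; [lia|exact Hm2].
    - exists N. split; [lia|]. lra. }
  apply G; exact H1.
Qed.

Lemma flw_end m w j : 0 < io m w -> flw m w (ln (io m w)) j = flw (S m) (Pm m w) 0 j.
Proof. intros H. rewrite flw_0, flw_tau by exact H. reflexivity. Qed.

Lemma gg_eq m t j : (m < 10)%nat -> tsf m <= t <= tsf (S m) -> (j < 10)%nat ->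
  gg t j = flw m (zz m) (t - tsf m) j.
Proof.
  intros Hm Ht Hj. unfold gg. replace (Nat.ltb j 10) with true by (symmetry; apply Nat.ltb_lt; exact Hj).
  destruct (Rlt_dec t T0) as [L|L].
  - assert (He : exists m, (m < 10)%nat /\ tsf m <= t < tsf (S m)).
    { apply exists_idx. split; [pose proof (tsf_nonneg m); lra| exact L]. }
    pose proof (epsilon_spec (inhabits 0%nat) _ He) as [Hm' Ht']. fold (gidx t) in Hm', Ht'.
    destruct (idx_unique m (gidx t) t Ht Ht') as [E|[E1 E2]].
    + rewrite E. reflexivity.
    + rewrite E1. subst t. rewrite Rminus_diag.
      change (zz (S m)) with (Pm m (zz m)). rewrite <- flw_end by (pose proof (zz_io m); lra).
      simpl tsf. f_equal. unfold tau. ring.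
  - assert (tsf (S m) <= T0) by (apply tsf_le; lia).
    assert (t = T0) by lra.
    destruct (Nat.eq_dec m 9) as [->|Hne]; [reflexivity|].
    exfalso. pose proof (tsf_mono (S m) 10 ltac:(lia)). pose proof (tsf_lt (S m)). unfold T0 in *. lra.
Qed.

Lemma inB_side m r w j : r <= Rr -> inB m r w -> (j < 10)%nat -> j <> en m -> side (bx m) j (w j).
Proof. intros Hr H Hj Hne. apply margin_side; try assumption.
  pose proof (H j Hj). pose proof (NF_Y m j Hj). pose proof Rr_pos. unfold Rr in *.
  eapply Rle_trans; [exact H0|]. nra. Qed.

Lemma side_next m j x : (j < 10)%nat -> j <> ex m -> side (bx (S m)) j x -> side (bx m) j x.
Proof. intros Hj Hne. unfold side. rewrite (NF_bxnext m j Hj).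
  replace (Nat.eqb j (ex m)) with false by (symmetry; apply Nat.eqb_neq; exact Hne). auto. Qed.

Lemma side_nextn m j x : (j < 10)%nat -> j = ex m -> side (bx (S m)) j x -> wside (bx m) j x -> False.
Proof. intros Hj He. unfold side, wside. rewrite (NF_bxnext m j Hj).
  replace (Nat.eqb j (ex m)) with true by (symmetry; apply Nat.eqb_eq; exact He).
  destruct (bx m j); simpl; lra. Qed.

Lemma orbit_inbox k u : 0 < u < tau k -> in_box (bx k) (flw k (zz k) u).
Proof.
  intros Hu. destruct (NF_exen k) as [Hc [He [Hne Hen]]].
  assert (HB : inB k Rr (zz k)) by (apply (inB_weaken k (Rr/2)); [pose Rr_pos; lra|apply zz_inB]).
  apply PV.
  - apply zz_io.
  - intros j Hj Hj'. destruct (Nat.eq_dec j (en k)) as [->|Hn].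
    + rewrite zz_wall. unfold wside. destruct (bx k (en k)); lra.
    + apply side_wside. apply (inB_side k Rr); auto; lra.
  - intros j Hj Hj'. apply side_next; try assumption.
    change (Pm k (zz k) j) with (zz (S k) j).
    apply (inB_side (S k) (Rr/2)); [pose Rr_pos; lra|apply zz_inB|exact Hj|]. rewrite Hen. exact Hj'.
  - apply (inB_side k Rr); auto; lra.
  - exact Hu.
Qed.

Lemma gg_traj : traj_pieces kappa1 kappa2 gg 10 tsf cycle_box T0.
Proof.
  split; [reflexivity|]. split; [reflexivity|]. split.
  { intros k _. apply tsf_lt. }
  intros k Hk t Ht. split.
  - intros j Hj. rewrite (gg_eq k t j Hk Ht Hj).
    rewrite (gg_eq k (tsf k) j Hk ltac:(pose proof (tsf_lt k); lra) Hj).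
    rewrite Rminus_diag, flw_0. unfold flw, F, bx. rewrite Nat.mod_small by exact Hk. reflexivity.
  - intros Ht'. apply (in_box_ext _ (flw k (zz k) (t - tsf k))).
    + intros j Hj. rewrite (gg_eq k t j Hk ltac:(lra) Hj). reflexivity.
    + replace (cycle_box k) with (bx k) by (unfold bx; rewrite Nat.mod_small by exact Hk; reflexivity).
      apply orbit_inbox. simpl in Ht'. lra.
Qed.


Definition betw (x1 x2 x : R) : Prop := (x1 <= x <= x2) \/ (x2 <= x <= x1).

Lemma flw_between m w s1 s s2 j : s1 <= s <= s2 -> betw (flw m w s1 j) (flw m w s2 j) (flw m w s j).
Proof.
  intros Hs. unfold betw, flw.
  assert (E1 : exp (- s2) <= exp (- s)) by (destruct (Req_dec s s2) as [->|]; [lra|left; apply exp_increasing; lra]).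
  assert (E2 : exp (- s) <= exp (- s1)) by (destruct (Req_dec s s1) as [->|]; [lra|left; apply exp_increasing; lra]).
  destruct (Rle_dec 0 (w j - F m j)).
  - right. split; apply Rplus_le_compat_l; apply Rmult_le_compat_l; lra.
  - left. split; apply Rplus_le_compat_l; nra.
Qed.

Lemma side_betw b j x1 x2 x : side b j x1 -> side b j x2 -> betw x1 x2 x -> side b j x.
Proof. unfold side, betw. destruct (b j); intros; lra. Qed.

Lemma abs_betw x1 x2 x c d : Rabs (x1 - c) <= d -> Rabs (x2 - c) <= d -> betw x1 x2 x -> Rabs (x - c) <= d.
Proof. intros H1 H2 H. apply Rabs_le_iff in H1. apply Rabs_le_iff in H2. apply Rabs_le_iff. unfold betw in H. lra. Qed.

Lemma io_side m x : side (bx m) (ex m) (x (ex m)) -> 1 < io m x.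
Proof.
  intros Hs. destruct (NF_exen m) as [Hc _]. pose proof (NF_Fc m) as [H1 _].
  unfold io. rewrite F_eq by exact Hc. unfold side in Hs. revert H1 Hs.
  destruct (bx m (ex m)); intros H1 Hs.
  - replace ((Ft m (ex m) - x (ex m)) / (Ft m (ex m) - 1/2)) with (1 + (x (ex m) - 1/2) / (1/2 - Ft m (ex m))) by (field; lra).
    assert (0 < (x (ex m) - 1/2) / (1/2 - Ft m (ex m))) by (apply Rdiv_lt_0_compat; lra). lra.
  - replace ((Ft m (ex m) - x (ex m)) / (Ft m (ex m) - 1/2)) with (1 + (1/2 - x (ex m)) / (Ft m (ex m) - 1/2)) by (field; lra).
    assert (0 < (1/2 - x (ex m)) / (Ft m (ex m) - 1/2)) by (apply Rdiv_lt_0_compat; lra). lra.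
Qed.

Lemma dB_inB m e w : 0 <= e <= Rr / 2 -> dB m e w (zz m) -> inB m Rr w.
Proof. intros He H j Hj. pose proof (H j Hj). pose proof (zz_inB m j Hj). pose proof (Y_pos m j Hj).
  replace (w j - a m j) with ((w j - zz m j) + (zz m j - a m j)) by ring.
  eapply Rle_trans; [apply Rabs_triang|]. nra. Qed.

Lemma dB_inBS m e w : 0 <= e <= Rr / 2 -> dB (S m) (th * e) w (zz (S m)) -> inB (S m) Rr w.
Proof. intros He H. apply (dB_inB (S m) (th * e)); [|exact H]. pose proof th_pos. unfold th in *. nra. Qed.

Lemma le_e3 a e b : 0 <= e -> 0 <= a <= 1 -> 0 <= b <= 1 -> a * e * b <= e.
Proof. intros. assert (a * e <= e) by nra. assert (0 <= a * e) by nra. nra. Qed.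

Lemma io_ext m v w : v (ex m) = w (ex m) -> io m v = io m w.
Proof. intros E. unfold io. rewrite E. reflexivity. Qed.

Lemma track m w' e s0 p :
  0 <= e <= Rr / 2 -> dB m e w' (zz m) -> 0 <= s0 <= tau m ->
  (forall j, (j < 10)%nat -> p j = flw m w' s0 j) ->
  wside (bx m) (en m) (p (en m)) -> side (bx m) (ex m) (p (ex m)) ->
  0 < ln (io m p) /\
  (forall u, 0 < u < ln (io m p) -> in_box (bx m) (flw m p u)) /\
  dB (S m) (th * e) (Pm m p) (zz (S m)) /\ Pm m p (ex m) = 1/2 /\
  (forall u, 0 <= u <= ln (io m p) -> exists t, 0 <= t <= tau m /\
     forall j, (j < 10)%nat -> Rabs (flw m p u j - flw m (zz m) t j) <= e) /\
  enters (bx m) p.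
Proof.
  intros He Hd Hs0 Hp Hen Hex.
  destruct (NF_exen m) as [Hc [Hen10 [Hne HenS]]].
  assert (HB : inB m Rr w') by (apply (dB_inB m e); assumption).
  assert (Hzz : inB m Rr (zz m)) by (apply (inB_weaken m (Rr/2)); [pose Rr_pos; lra|apply zz_inB]).
  assert (Hio' : 1 < io m w') by (apply io_gt1; exact HB).
  assert (Hiop : io m p = io m w' * exp (- s0)).
  { rewrite <- io_flw. apply io_ext. apply Hp. exact Hc. }
  assert (Hio : 1 < io m p) by (apply io_side; exact Hex).
  assert (Hsg : ln (io m p) = ln (io m w') - s0).
  { rewrite Hiop, ln_mult, ln_exp by (try apply exp_pos; lra). ring. }
  assert (HP : forall j, (j < 10)%nat -> Pm m p j = Pm m w' j).
  { intros j Hj. rewrite (Pm_ext m p (flw m w' s0) Hp j Hj). apply Pm_flw. lra. }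
  assert (Hlip : dB (S m) (th * e) (Pm m w') (zz (S m))).
  { apply lip; try assumption; lra. }
  assert (HPB : inB (S m) Rr (Pm m w')) by (apply (dB_inBS m e); assumption).
  pose proof th_pos as Hth.
  assert (Hth1 : th <= 1) by (unfold th; lra).
  assert (Htau : forall j, (j < 10)%nat -> Rabs (flw m w' (tau m) j - zz (S m) j) <= e * Y m j).
  { intros j Hj. change (zz (S m) j) with (Pm m (zz m) j). rewrite <- flw_tau by (pose proof (zz_io m); lra).
    fold (tau m). unfold flw.
    replace (F m j + (w' j - F m j) * exp (- tau m) - (F m j + (zz m j - F m j) * exp (- tau m)))
      with ((w' j - zz m j) * exp (- tau m)) by ring.
    rewrite Rabs_mult, (Rabs_pos_eq (exp _)) by (left; apply exp_pos).
    pose proof (exp_lt1 (tau m) (tau_pos m)). pose proof (exp_pos (- tau m)).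
    pose proof (Hd j Hj). pose proof (Rabs_pos (w' j - zz m j)). nra. }
  assert (Hsides : forall j, (j < 10)%nat -> j <> en m -> j <> ex m -> side (bx m) j (p j)).
  { intros j Hj Hn1 Hn2. rewrite Hp by exact Hj.
    apply (side_betw _ _ (flw m w' 0 j) (flw m w' (tau m) j)).
    - rewrite flw_0. apply (inB_side m Rr); auto; lra.
    - apply side_next; try assumption. apply margin_side; [exact Hj|rewrite HenS; exact Hn2|].
      pose proof (Htau j Hj). pose proof (zz_inB (S m) j Hj). pose proof (NF_Y m j Hj). pose proof (NF_Y (S m) j Hj).
      replace (flw m w' (tau m) j - a (S m) j) with ((flw m w' (tau m) j - zz (S m) j) + (zz (S m) j - a (S m) j)) by ring.
      eapply Rle_trans; [apply Rabs_triang|]. unfold Rr in *. nra.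
    - apply flw_between. lra. }
  split; [apply ln_pos_gt1; exact Hio|].
  split.
  { apply PV; [exact Hio| | |exact Hex].
    - intros j Hj Hj'. destruct (Nat.eq_dec j (en m)) as [->|Hn]; [exact Hen|].
      apply side_wside. apply Hsides; assumption.
    - intros j Hj Hj'. rewrite HP by exact Hj. apply side_next; try assumption.
      apply (inB_side (S m) Rr); try assumption; [lra|]. rewrite HenS. exact Hj'. }
  split.
  { intros j Hj. rewrite HP by exact Hj. apply Hlip; exact Hj. }
  split.
  { apply Pm_ex. lra. }
  split.
  { intros u Hu.
    assert (Hfl : forall j, (j < 10)%nat -> flw m p u j = flw m w' (s0 + u) j).
    { intros j Hj. rewrite <- flw_add. unfold flw at 1. rewrite Hp by exact Hj. reflexivity. }
    destruct (Rle_dec (s0 + u) (tau m)) as [Hle|Hgt].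
    - exists (s0 + u). split; [lra|]. intros j Hj. rewrite Hfl by exact Hj. unfold flw.
      replace (F m j + (w' j - F m j) * exp (- (s0 + u)) - (F m j + (zz m j - F m j) * exp (- (s0 + u))))
        with ((w' j - zz m j) * exp (- (s0 + u))) by ring.
      rewrite Rabs_mult, (Rabs_pos_eq (exp _)) by (left; apply exp_pos).
      assert (exp (- (s0 + u)) <= 1) by (rewrite <- exp_0; destruct (Req_dec (s0+u) 0) as [E|E];
        [rewrite E, Ropp_0; lra| left; apply exp_increasing; lra]).
      pose proof (exp_pos (- (s0 + u))). pose proof (Hd j Hj). pose proof (Rabs_pos (w' j - zz m j)).
      pose proof (NF_Y m j Hj). nra.
    - exists (tau m). split; [pose proof (tau_pos m); lra|]. intros j Hj. rewrite Hfl by exact Hj.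
      change (flw m (zz m) (tau m) j) with (flw m (zz m) (ln (io m (zz m))) j).
      rewrite flw_tau by (pose proof (zz_io m); lra). change (Pm m (zz m) j) with (zz (S m) j).
      apply (abs_betw (flw m w' (tau m) j) (flw m w' (ln (io m w')) j)).
      + pose proof (Htau j Hj). pose proof (NF_Y m j Hj). nra.
      + rewrite flw_tau by lra. pose proof (Hlip j Hj). pose proof (NF_Y (S m) j Hj).
        pose proof (le_e3 th e (Y (S m) j) ltac:(lra) ltac:(lra) ltac:(lra)). lra.
      + apply flw_between. lra. }
  intros j Hj. destruct (Nat.eq_dec j (en m)) as [->|Hn].
  - destruct (Req_dec (p (en m)) (1/2)) as [E|E].
    + right. split; [exact E|]. split.
      * fold (F m (en m)). rewrite F_eq by exact Hen10. apply NF_Fe.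
      * intros i Hi Hne'. destruct (Nat.eq_dec i (ex m)) as [->|Hn']; [exact Hex|]. apply Hsides; assumption.
    + left. unfold side, wside in *. destruct (bx m (en m)); lra.
  - left. destruct (Nat.eq_dec j (ex m)) as [->|Hn']; [exact Hex|]. apply Hsides; assumption.
Qed.


Lemma F_mod m j : F m j = F (m mod 10) j.
Proof. unfold F, bx. rewrite Nat.Div0.mod_mod. reflexivity. Qed.
Lemma ex_mod m : ex m = ex (m mod 10).
Proof. unfold ex. rewrite Nat.Div0.mod_mod. reflexivity. Qed.
Lemma io_mod m w : io m w = io (m mod 10) w.
Proof. unfold io. rewrite <- ex_mod, <- !F_mod. reflexivity. Qed.
Lemma flw_mod m w u j : flw m w u j = flw (m mod 10) w u j.
Proof. unfold flw. rewrite <- F_mod. reflexivity. Qed.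
Lemma tau_mod m : tau m = tau (m mod 10).
Proof. unfold tau. rewrite io_mod. f_equal. apply io_ext.
  rewrite <- ex_mod. apply zz_mod. apply NF_exen. Qed.

Lemma orbit_near m t' v e eps : 0 <= t' <= tau m ->
  (forall j, (j < 10)%nat -> Rabs (v j - flw m (zz m) t' j) <= e) -> e < eps ->
  near_orbit gg T0 eps v.
Proof.
  intros Ht H He. set (r := (m mod 10)%nat).
  assert (Hr : (r < 10)%nat) by (apply Nat.mod_upper_bound; lia).
  rewrite tau_mod in Ht. fold r in Ht.
  exists (tsf r + t'). split.
  - split. pose proof (tsf_nonneg r); lra.
    assert (tsf (S r) <= T0) by (apply tsf_le; lia). simpl in H0. lra.
  - intros j Hj. rewrite (gg_eq r) by (simpl; lra || exact Hr || exact Hj).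
    replace (tsf r + t' - tsf r) with t' by ring.
    specialize (H j Hj). rewrite flw_mod in H. fold r in H. unfold flw in H |- *.
    rewrite (zz_mod m j Hj) in H. fold r in H. lra.
Qed.

Fixpoint qs (k0 : nat) (p : state) (n : nat) : state :=
  match n with O => p | S n' => Pm (k0 + n') (qs k0 p n') end.
Fixpoint tt (k0 : nat) (p : state) (n : nat) : R :=
  match n with O => 0 | S n' => tt k0 p n' + ln (io (k0 + n') (qs k0 p n')) end.

Definition TH (k0 : nat) (w0 : state) (e0 s0 : R) (p : state) : Prop :=
  0 <= e0 <= Rr / 2 /\ dB k0 e0 w0 (zz k0) /\ 0 <= s0 <= tau k0 /\
  (forall j, (j < 10)%nat -> p j = flw k0 w0 s0 j) /\
  wside (bx k0) (en k0) (p (en k0)) /\ side (bx k0) (ex k0) (p (ex k0)).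

Definition Good (k0 : nat) (p : state) (e0 : R) (n : nat) : Prop :=
  exists w e s, 0 <= e <= th ^ n * e0 /\ e <= Rr / 2 /\ dB (k0 + n) e w (zz (k0 + n)) /\
    0 <= s <= tau (k0 + n) /\ (forall j, (j < 10)%nat -> qs k0 p n j = flw (k0 + n) w s j) /\
    wside (bx (k0 + n)) (en (k0 + n)) (qs k0 p n (en (k0 + n))) /\
    side (bx (k0 + n)) (ex (k0 + n)) (qs k0 p n (ex (k0 + n))).

Lemma pow_th_le n : 0 < th ^ n <= 1.
Proof. induction n as [|n IH]; simpl; unfold th in *; nra. Qed.

Lemma good_all k0 w0 e0 s0 p : TH k0 w0 e0 s0 p ->
  forall n, Good k0 p e0 n /\ ((1 <= n)%nat -> inB (k0 + n) Rr (qs k0 p n)).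
Proof.
  intros [He [Hd [Hs [Hp [Hen Hex]]]]] n. induction n as [|n [IH _]].
  - split; [|intros; lia]. exists w0, e0, s0. rewrite Nat.add_0_r. simpl. repeat split; try lra; assumption.
  - destruct IH as [w [e [s [He1 [He2 [Hd' [Hs' [Hp' [Hen' Hex']]]]]]]]].
    destruct (track (k0 + n) w e s (qs k0 p n) ltac:(lra) Hd' Hs' Hp' Hen' Hex')
      as [_ [_ [HdS [Hex1 _]]]].
    unfold Good. replace (k0 + S n)%nat with (S (k0 + n)) by lia.
    change (qs k0 p (S n)) with (Pm (k0 + n) (qs k0 p n)).
    assert (HB : inB (S (k0 + n)) Rr (Pm (k0 + n) (qs k0 p n))).
    { apply (dB_inBS (k0 + n) e); [lra|exact HdS]. }
    destruct (NF_exen (k0 + n)) as [_ [_ [_ HenS]]].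
    destruct (NF_exen (S (k0 + n))) as [HcS [_ [HneS _]]].
    split; [|intros; exact HB].
    exists (Pm (k0 + n) (qs k0 p n)), (th * e), 0. pose proof th_pos. pose proof (pow_th_le n).
    repeat split.
    + nra.
    + simpl. rewrite Rmult_assoc. apply Rmult_le_compat_l; lra.
    + unfold th in *; nra.
    + exact HdS.
    + lra.
    + left; apply tau_pos.
    + intros j Hj. rewrite flw_0. reflexivity.
    + rewrite HenS, Hex1. unfold wside. destruct (bx _ _); lra.
    + apply (inB_side _ Rr); try assumption; try lra. auto.
Qed.

Lemma chain_facts k0 w0 e0 s0 p n : TH k0 w0 e0 s0 p ->
  let m := (k0 + n)%nat in let q := qs k0 p n in
  0 < ln (io m q) /\ ((1 <= n)%nat -> ln (7/5) <= ln (io m q)) /\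
  (forall u, 0 < u < ln (io m q) -> in_box (bx m) (flw m q u)) /\
  (forall u eps, 0 <= u <= ln (io m q) -> th ^ n * e0 < eps -> near_orbit gg T0 eps (flw m q u)) /\
  enters (bx m) q /\
  (forall j, (j < 10)%nat -> flw m q (ln (io m q)) j = qs k0 p (S n) j).
Proof.
  intros HT m q. destruct (good_all k0 w0 e0 s0 p HT n) as [[w [e [s [He1 [He2 [Hd [Hs [Hp [Hen Hex]]]]]]]]] HB].
  fold m q in Hd, Hs, Hp, Hen, Hex, HB.
  destruct (track m w e s q ltac:(lra) Hd Hs Hp Hen Hex) as [Hsg [Hbox [_ [_ [Hnear Hent]]]]].
  split; [exact Hsg|]. split.
  { intros Hn. specialize (HB Hn). pose proof (io_bounds m q HB). pose proof (NF_IL m).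
    destruct (Rle_lt_or_eq_dec (7/5) (io m q) ltac:(lra)) as [L|E]; [left; apply ln_increasing; lra| rewrite E; lra]. }
  split; [exact Hbox|]. split.
  { intros u eps Hu Heps. destruct (Hnear u Hu) as [t [Ht Hj]].
    apply (orbit_near m t _ e eps Ht Hj). lra. }
  split; [exact Hent|].
  intros j Hj. pose proof (io_side m q Hex). rewrite flw_tau by lra. reflexivity.
Qed.

Lemma tt_S k0 p n : tt k0 p (S n) = tt k0 p n + ln (io (k0 + n) (qs k0 p n)).
Proof. reflexivity. Qed.

Lemma sol_track k0 w0 e0 s0 p h : TH k0 w0 e0 s0 p -> solution kappa1 kappa2 h ->
  (forall j, (j < 10)%nat -> h 0 j = p j) ->
  forall n t, tt k0 p n <= t <= tt k0 p (S n) ->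
  forall j, (j < 10)%nat -> h t j = flw (k0 + n) (qs k0 p n) (t - tt k0 p n) j.
Proof.
  intros HT Hsol H0.
  assert (Ht0 : forall n, 0 <= tt k0 p n).
  { induction n as [|n IH]; simpl; [lra|]. destruct (chain_facts k0 w0 e0 s0 p n HT) as [Hs _]. lra. }
  assert (Key : forall n, (forall j, (j < 10)%nat -> h (tt k0 p n) j = qs k0 p n j) ->
     forall t, tt k0 p n <= t <= tt k0 p (S n) ->
     forall j, (j < 10)%nat -> h t j = flw (k0 + n) (qs k0 p n) (t - tt k0 p n) j).
  { intros n Hq t Ht j Hj.
    destruct (chain_facts k0 w0 e0 s0 p n HT) as [Hsg [_ [Hbox [_ [Hent _]]]]].
    assert (HT' : 0 < tt k0 p (S n)) by (rewrite tt_S; pose proof (Ht0 n); lra).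
    destruct (Hsol (tt k0 p (S n)) HT') as [N [ts [bs Htr]]].
    unfold flw. apply (uniq h N ts bs (tt k0 p (S n)) (tt k0 p n) (bx (k0 + n)) (qs k0 p n)
        (ln (io (k0 + n) (qs k0 p n))) Htr (Ht0 n) Hsg Hq Hent).
    all: try (intros u Hu; apply Hbox; exact Hu); try exact Hj; rewrite ?tt_S in *; lra. }
  induction n as [|n IH].
  - apply Key. intros j Hj. simpl. apply H0; exact Hj.
  - apply Key. intros j Hj. rewrite (IH (tt k0 p (S n))) by (try exact Hj; rewrite tt_S; pose proof (chain_facts k0 w0 e0 s0 p n HT) as [Hs _]; lra).
    rewrite tt_S. replace (tt k0 p n + ln (io (k0 + n) (qs k0 p n)) - tt k0 p n) with (ln (io (k0 + n) (qs k0 p n))) by ring.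
    destruct (chain_facts k0 w0 e0 s0 p n HT) as [_ [_ [_ [_ [_ Hl]]]]]. apply Hl; exact Hj.
Qed.

Lemma near_ext g T eps v w : (forall j, (j < 10)%nat -> v j = w j) -> near_orbit g T eps w -> near_orbit g T eps v.
Proof. intros E [t [Ht H]]. exists t. split; [exact Ht|]. intros j Hj. rewrite E by exact Hj. apply H; exact Hj. Qed.

Lemma ln75_pos : 0 < ln (7/5).
Proof. apply ln_pos_gt1. lra. Qed.

Lemma tt_facts k0 w0 e0 s0 p : TH k0 w0 e0 s0 p ->
  (forall n, tt k0 p n <= tt k0 p (S n)) /\ (forall n, tt k0 p (S n) >= INR n * ln (7/5)) /\ tt k0 p 0 = 0.
Proof.
  intros HT. split; [|split; [|reflexivity]].
  - intros n. rewrite tt_S. destruct (chain_facts k0 w0 e0 s0 p n HT) as [H _]. lra.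
  - induction n as [|n IH].
    + destruct (chain_facts k0 w0 e0 s0 p 0 HT) as [H _]. rewrite tt_S. simpl INR. simpl tt. lra.
    + rewrite tt_S. destruct (chain_facts k0 w0 e0 s0 p (S n) HT) as [_ [H _]].
      specialize (H ltac:(lia)). rewrite S_INR. lra.
Qed.

Lemma cover k0 w0 e0 s0 p : TH k0 w0 e0 s0 p ->
  forall n0 t, tt k0 p n0 <= t -> exists n, (n0 <= n)%nat /\ tt k0 p n <= t <= tt k0 p (S n).
Proof.
  intros HT n0 t Ht. destruct (tt_facts k0 w0 e0 s0 p HT) as [Hm [Hlb _]].
  assert (G : forall K, t <= tt k0 p (n0 + K) -> exists n, (n0 <= n)%nat /\ tt k0 p n <= t <= tt k0 p (S n)).
  { induction K as [|K IH]; intros HK.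
    - exists n0. split; [lia|]. rewrite Nat.add_0_r in HK. split; [exact Ht|]. pose proof (Hm n0). lra.
    - destruct (Rle_dec t (tt k0 p (n0 + K))) as [L|L]; [apply IH; exact L|].
      exists (n0 + K)%nat. split; [lia|]. replace (n0 + S K)%nat with (S (n0 + K)) in HK by lia. lra. }
  destruct (archimed (t / ln (7/5))) as [Hup _].
  pose proof ln75_pos.
  set (N := Z.to_nat (up (t / ln (7/5)))).
  assert (HN : IZR (up (t / ln (7/5))) <= INR N).
  { unfold N. destruct (Z_lt_le_dec (up (t / ln (7/5))) 0) as [Hz|Hz].
    - apply IZR_lt in Hz. pose proof (pos_INR (Z.to_nat (up (t / ln (7/5))))). lra.
    - rewrite INR_IZR_INZ, Z2Nat.id by exact Hz. lra. }
  assert (Ht' : t <= INR N * ln (7/5)).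
  { assert (t / ln (7/5) <= INR N) by lra.
    apply (Rmult_le_compat_r (ln (7/5))) in H0; [|lra]. unfold Rdiv in H0.
    rewrite Rmult_assoc, Rinv_l, Rmult_1_r in H0 by lra. exact H0. }
  apply (G (S N)). replace (n0 + S N)%nat with (S (n0 + N)) by lia.
  pose proof (Hlb (n0 + N)%nat). rewrite plus_INR in H0. pose proof (pos_INR n0).
  assert (0 <= INR n0 * ln (7/5)) by (apply Rmult_le_pos; lra).
  rewrite Rmult_plus_distr_r in H0. lra.
Qed.


Lemma pow_th_mono n0 n : (n0 <= n)%nat -> th ^ n <= th ^ n0.
Proof. intros H. induction H as [|n H IH]; [lra|]. simpl. pose proof (pow_th_le n). unfold th in *. nra. Qed.

Lemma sol_near k0 w0 e0 s0 p h : TH k0 w0 e0 s0 p -> solution kappa1 kappa2 h ->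
  (forall j, (j < 10)%nat -> h 0 j = p j) ->
  forall n0 t eps, tt k0 p n0 <= t -> th ^ n0 * e0 < eps -> near_orbit gg T0 eps (h t).
Proof.
  intros HT Hs H0 n0 t eps Ht He.
  destruct (cover k0 w0 e0 s0 p HT n0 t Ht) as [n [Hn Htn]].
  apply (near_ext _ _ _ _ (flw (k0 + n) (qs k0 p n) (t - tt k0 p n))).
  { intros j Hj. apply (sol_track k0 w0 e0 s0 p h HT Hs H0 n t Htn j Hj). }
  destruct (chain_facts k0 w0 e0 s0 p n HT) as [_ [_ [_ [Hnear _]]]].
  apply Hnear.
  - rewrite tt_S in Htn. lra.
  - destruct HT as [[He0 _] _]. pose proof (pow_th_mono n0 n Hn).
    assert (th ^ n * e0 <= th ^ n0 * e0) by (apply Rmult_le_compat_r; lra). lra.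
Qed.

Lemma tt_lt k0 w0 e0 s0 p n : TH k0 w0 e0 s0 p -> tt k0 p n < tt k0 p (S n).
Proof. intros HT. rewrite tt_S. destruct (chain_facts k0 w0 e0 s0 p n HT) as [H _]. lra. Qed.

Lemma tt_mono k0 w0 e0 s0 p a b : TH k0 w0 e0 s0 p -> (a < b)%nat -> tt k0 p (S a) <= tt k0 p b.
Proof. intros HT H. induction b as [|b IH]; [lia|].
  destruct (Nat.eq_dec a b) as [->|Hne]; [lra|]. pose proof (tt_lt k0 w0 e0 s0 p b HT). specialize (IH ltac:(lia)). lra. Qed.

Definition hidx (k0 : nat) (p : state) (t : R) : nat :=
  epsilon (inhabits 0%nat) (fun n => tt k0 p n <= t < tt k0 p (S n)).

Definition hh (k0 : nat) (p : state) (t : R) : state := fun j =>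
  if Nat.ltb j 10 then flw (k0 + hidx k0 p t) (qs k0 p (hidx k0 p t)) (t - tt k0 p (hidx k0 p t)) j
  else p j.

Lemma hh_eq k0 w0 e0 s0 p n t j : TH k0 w0 e0 s0 p -> tt k0 p n <= t <= tt k0 p (S n) -> (j < 10)%nat ->
  hh k0 p t j = flw (k0 + n) (qs k0 p n) (t - tt k0 p n) j.
Proof.
  intros HT Ht Hj. unfold hh. replace (Nat.ltb j 10) with true by (symmetry; apply Nat.ltb_lt; exact Hj).
  assert (Hex : exists n, tt k0 p n <= t < tt k0 p (S n)).
  { destruct (Rlt_dec t (tt k0 p (S n))) as [L|L]; [exists n; lra|].
    exists (S n). split; [lra|]. pose proof (tt_lt k0 w0 e0 s0 p (S n) HT). lra. }
  pose proof (epsilon_spec (inhabits 0%nat) _ Hex) as Hs. fold (hidx k0 p t) in Hs.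
  set (n' := hidx k0 p t) in *.
  destruct (lt_eq_lt_dec n' n) as [[Hlt|Heq]|Hgt].
  - exfalso. pose proof (tt_mono k0 w0 e0 s0 p n' n HT Hlt). lra.
  - rewrite Heq. reflexivity.
  - destruct (Nat.eq_dec n' (S n)) as [E|Hne].
    + rewrite E. assert (Et : t = tt k0 p (S n)) by (rewrite E in Hs; lra).
      rewrite Et, Rminus_diag, flw_0. rewrite tt_S.
      replace (tt k0 p n + ln (io (k0 + n) (qs k0 p n)) - tt k0 p n) with (ln (io (k0 + n) (qs k0 p n))) by ring.
      destruct (chain_facts k0 w0 e0 s0 p n HT) as [_ [_ [_ [_ [_ Hl]]]]]. symmetry. apply Hl; exact Hj.
    + exfalso. pose proof (tt_mono k0 w0 e0 s0 p (S n) n' HT ltac:(lia)). pose proof (tt_lt k0 w0 e0 s0 p (S n) HT). lra.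
Qed.

Lemma hh_0 k0 w0 e0 s0 p : TH k0 w0 e0 s0 p -> hh k0 p 0 = p.
Proof.
  intros HT. apply functional_extensionality. intros j.
  destruct (lt_dec j 10) as [Hj|Hj].
  - assert (R0 : tt k0 p 0 <= 0 <= tt k0 p 1).
    { pose proof (tt_lt k0 w0 e0 s0 p 0 HT). change (tt k0 p 0) with 0 in *. lra. }
    rewrite (hh_eq k0 w0 e0 s0 p 0 0 j HT R0 Hj).
    simpl tt. rewrite Rminus_0_r, flw_0. reflexivity.
  - unfold hh. replace (Nat.ltb j 10) with false by (symmetry; apply Nat.ltb_ge; lia). reflexivity.
Qed.

Lemma hh_sol k0 w0 e0 s0 p : TH k0 w0 e0 s0 p -> solution kappa1 kappa2 (hh k0 p).
Proof.
  intros HT T HT0.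
  assert (Hn : exists n, tt k0 p n < T <= tt k0 p (S n)).
  { destruct (cover k0 w0 e0 s0 p HT 0 T ltac:(simpl; lra)) as [n [_ [H1 H2]]].
    destruct (Req_dec (tt k0 p n) T) as [E|E].
    - destruct n as [|n]. simpl in E. lra.
      exists n. pose proof (tt_lt k0 w0 e0 s0 p n HT). lra.
    - exists n. lra. }
  destruct Hn as [n [Hn1 Hn2]].
  exists (S n), (fun k => if Nat.leb k n then tt k0 p k else T), (fun k => bx (k0 + k)).
  split; [simpl; reflexivity|]. split.
  { replace (Nat.leb (S n) n) with false by (symmetry; apply Nat.leb_gt; lia). reflexivity. }
  split.
  { intros k Hk. destruct (Nat.eq_dec k n) as [->|Hne].
    - replace (Nat.leb n n) with true by (symmetry; apply Nat.leb_le; lia).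
      replace (Nat.leb (S n) n) with false by (symmetry; apply Nat.leb_gt; lia). exact Hn1.
    - replace (Nat.leb k n) with true by (symmetry; apply Nat.leb_le; lia).
      replace (Nat.leb (S k) n) with true by (symmetry; apply Nat.leb_le; lia). apply (tt_lt k0 w0 e0 s0 p k HT). }
  intros k Hk t Ht.
  replace (Nat.leb k n) with true in * by (symmetry; apply Nat.leb_le; lia).
  assert (Ht' : tt k0 p k <= t <= tt k0 p (S k)).
  { destruct (Nat.eq_dec k n) as [->|Hne].
    - replace (Nat.leb (S n) n) with false in Ht by (symmetry; apply Nat.leb_gt; lia). lra.
    - replace (Nat.leb (S k) n) with true in Ht by (symmetry; apply Nat.leb_le; lia). exact Ht. }
  split.
  - intros j Hj. rewrite (hh_eq k0 w0 e0 s0 p k t j HT Ht' Hj).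
    rewrite (hh_eq k0 w0 e0 s0 p k (tt k0 p k) j HT ltac:(pose proof (tt_lt k0 w0 e0 s0 p k HT); lra) Hj).
    rewrite Rminus_diag, flw_0. reflexivity.
  - intros Ho. apply (in_box_ext _ (flw (k0 + k) (qs k0 p k) (t - tt k0 p k))).
    + intros j Hj. symmetry. apply (hh_eq k0 w0 e0 s0 p k t j HT Ht' Hj).
    + destruct (chain_facts k0 w0 e0 s0 p k HT) as [_ [_ [Hbox _]]]. apply Hbox.
      assert (t < tt k0 p (S k)).
      { destruct (Nat.eq_dec k n) as [->|Hne].
        - replace (Nat.leb (S n) n) with false in Ho by (symmetry; apply Nat.leb_gt; lia). lra.
        - replace (Nat.leb (S k) n) with true in Ho by (symmetry; apply Nat.leb_le; lia). lra. }
      rewrite tt_S in H. lra.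
Qed.


Lemma gg_piece p d : near_orbit gg T0 d p ->
  exists m s, (m < 10)%nat /\ 0 <= s <= tau m /\ forall j, (j < 10)%nat -> Rabs (p j - flw m (zz m) s j) < d.
Proof.
  intros [t [Ht H]].
  assert (Hm : exists m, (m < 10)%nat /\ tsf m <= t <= tsf (S m)).
  { destruct (Rlt_dec t T0) as [L|L].
    - destruct (exists_idx t ltac:(lra)) as [m [Hm Hm']]. exists m. split; [exact Hm|lra].
    - exists 9%nat. split; [lia|]. unfold T0 in *. apply Rnot_lt_le in L.
      pose proof (tsf_lt 9). split; lra. }
  destruct Hm as [m [Hm Hmt]]. exists m, (t - tsf m). split; [exact Hm|]. split.
  - simpl in Hmt. lra.
  - intros j Hj. rewrite <- (gg_eq m t j Hm Hmt Hj). apply H; exact Hj.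
Qed.

Definition bflw (m : nat) (w : state) (s : R) : state := fun j => F m j + (w j - F m j) * exp s.

Lemma bflw_flw m w s j : flw m (bflw m w s) s j = w j.
Proof. unfold flw, bflw. replace ((F m j + (w j - F m j) * exp s - F m j) * exp (- s)) with ((w j - F m j) * (exp s * exp (- s))) by ring.
  rewrite <- exp_plus, Rplus_opp_r, exp_0. ring. Qed.

Lemma bflw_dist m w v s j : Rabs (bflw m w s j - v j) = Rabs (w j - flw m v s j) * exp s.
Proof. unfold flw, bflw.
  replace (F m j + (w j - F m j) * exp s - v j) with ((w j - (F m j + (v j - F m j) * exp (- s))) * exp s).
  - rewrite Rabs_mult, (Rabs_pos_eq (exp s)) by (left; apply exp_pos). reflexivity.
  - replace ((w j - (F m j + (v j - F m j) * exp (- s))) * exp s) with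
      ((w j - F m j) * exp s - (v j - F m j) * (exp (- s) * exp s)) by ring.
    rewrite <- exp_plus, Rplus_opp_l, exp_0. ring.
Qed.

Lemma exp_tau_le m s : s <= tau m -> exp s <= 3.
Proof. intros H. apply Rle_trans with (exp (tau m)).
  - destruct (Req_dec s (tau m)) as [->|]; [lra|left; apply exp_increasing; lra].
  - unfold tau. rewrite exp_ln by (pose proof (zz_io m); lra).
    assert (inB m Rr (zz m)) by (apply (inB_weaken m (Rr/2)); [pose Rr_pos; lra|apply zz_inB]).
    pose proof (io_bounds m (zz m) H0). pose proof (NF_IL m). lra. Qed.

Lemma zz_range m j : (j < 10)%nat -> Rabs (zz m j - F m j) <= 2.
Proof. intros Hj. pose proof (zz_inB m j Hj). pose proof (NF_range m j Hj). pose proof (NF_Frange m j Hj).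
  rewrite F_eq by exact Hj. apply Rabs_le_iff in H. apply Rabs_le_iff.
  pose proof (NF_Y m j Hj). pose proof Rr_pos. assert (0 <= Rr * Y m j) by nra. nra. Qed.

Lemma dB_of_close m e w : 0 <= e -> (forall j, (j < 10)%nat -> Rabs (w j - zz m j) <= e / 100) -> dB m e w (zz m).
Proof. intros He H j Hj. pose proof (H j Hj). pose proof (NF_Y m j Hj). nra. Qed.

Lemma close_side m p d j : 0 <= d <= 1/100 -> (j < 10)%nat -> j <> en m ->
  Rabs (p j - zz m j) <= d -> side (bx m) j (p j).
Proof. intros Hd Hj Hne H. apply margin_side; try assumption.
  pose proof (zz_inB m j Hj). pose proof (NF_Y m j Hj). pose proof Rr_pos. unfold Rr in *.
  replace (p j - a m j) with ((p j - zz m j) + (zz m j - a m j)) by ring.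
  eapply Rle_trans; [apply Rabs_triang|]. nra. Qed.

Lemma bx_per m : bx (m + 10) = bx m.
Proof. unfold bx. rewrite md10. reflexivity. Qed.
Lemma en_per m : en (m + 10) = en m.
Proof. unfold en. replace (m + 10 + 9)%nat with ((m + 9) + 10)%nat by lia. apply ex_per. Qed.

Lemma flw_sub m v s t j : flw m v s j - flw m v t j = (v j - F m j) * (exp (- s) - exp (- t)).
Proof. unfold flw. ring. Qed.

Lemma init_red p d : 0 < d -> 1500 * d <= Rr / 2 -> near_orbit gg T0 d p ->
  exists k0 w0 s0, TH k0 w0 (1500 * d) s0 p.
Proof.
  intros Hd Hdr Hn. pose proof Rr_pos as HRr. unfold Rr in Hdr.
  destruct (gg_piece p d Hn) as [m [s [Hm [Hs Hp]]]].
  destruct (NF_exen m) as [Hc [He [Hne HenS]]].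
  assert (He0 : 0 <= 1500 * d <= Rr / 2) by (unfold Rr; lra).
  destruct (classic (wside (bx m) (en m) (p (en m)))) as [Hw|Hw].
  - destruct (classic (side (bx m) (ex m) (p (ex m)))) as [Hx|Hx].
    +
      exists m, (bflw m p s), s. split; [exact He0|]. split.
      { apply dB_of_close; [lra|]. intros j Hj. rewrite bflw_dist.
        pose proof (Hp j Hj). pose proof (exp_tau_le m s ltac:(lra)). pose proof (exp_pos s).
        pose proof (Rabs_pos (p j - flw m (zz m) s j)). nra. }
      split; [exact Hs|]. split; [intros j Hj; symmetry; apply bflw_flw|]. split; assumption.
    +
      assert (Hcl : forall j, (j < 10)%nat -> Rabs (p j - zz (S m) j) < 5 * d).
      { set (x := flw m (zz m) s).
        set (g := exp (- s) - exp (- tau m)).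
        assert (Hg : 0 <= g).
        { unfold g. destruct (Req_dec s (tau m)) as [->|]; [lra|]. left. apply Rlt_0_minus, exp_increasing. lra. }
        assert (EzS : forall j, zz (S m) j = flw m (zz m) (tau m) j).
        { intros j. change (zz (S m) j) with (Pm m (zz m) j). unfold tau. rewrite flw_tau; [reflexivity|].
          pose proof (zz_io m); lra. }
        assert (Ex : forall j, x j - zz (S m) j = (zz m j - F m j) * g).
        { intros j. rewrite EzS. unfold x. apply flw_sub. }
        assert (Hxc : Rabs (x (ex m) - 1/2) < d).
        { pose proof (Ex (ex m)) as E1. rewrite EzS in E1. change (flw m (zz m) (tau m) (ex m)) with (flw m (zz m) (ln (io m (zz m))) (ex m)) in E1.
          rewrite flw_tau in E1 by (pose proof (zz_io m); lra). rewrite Pm_ex in E1 by (pose proof (zz_io m); lra).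
          assert (Hzs : side (bx m) (ex m) (zz m (ex m))).
          { apply (inB_side m (Rr/2)); try assumption; [lra|apply zz_inB|auto]. }
          pose proof (NF_Fc m) as [HF _]. rewrite <- F_eq in HF by exact Hc.
          pose proof (Hp (ex m) Hc) as Hpc. fold x in Hpc.
          unfold side in Hzs, Hx. revert Hzs Hx HF. destruct (bx m (ex m)); intros Hzs Hx0 HF.
          - assert (x (ex m) - 1/2 >= 0) by (rewrite E1; apply Rle_ge, Rmult_le_pos; lra).
            apply Rnot_lt_le in Hx0. apply Rabs_def2 in Hpc as [Hp1 Hp2]. rewrite Rabs_pos_eq by lra. lra.
          - assert (x (ex m) - 1/2 <= 0) by (rewrite E1; assert ((zz m (ex m) - F m (ex m)) <= 0) by lra; nra).
            apply Rnot_lt_le in Hx0. apply Rabs_def2 in Hpc as [Hp1 Hp2]. rewrite Rabs_left1 by lra. lra. }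
        assert (Hgd : g < 2 * d).
        { pose proof (Ex (ex m)) as E1. rewrite EzS in E1.
          change (flw m (zz m) (tau m) (ex m)) with (flw m (zz m) (ln (io m (zz m))) (ex m)) in E1.
          rewrite flw_tau in E1 by (pose proof (zz_io m); lra). rewrite Pm_ex in E1 by (pose proof (zz_io m); lra).
          assert (Hzs : side (bx m) (ex m) (zz m (ex m))).
          { apply (inB_side m (Rr/2)); try assumption; [lra|apply zz_inB|auto]. }
          pose proof (NF_Fc m) as [HF HF2]. rewrite <- F_eq in HF, HF2 by exact Hc.
          assert (Hz : 1/2 <= Rabs (zz m (ex m) - F m (ex m))).
          { unfold side in Hzs. revert Hzs HF. destruct (bx m (ex m)); intros Hzs HF.
            - rewrite Rabs_pos_eq by lra. lra.
            - rewrite Rabs_left by lra. lra. }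
          rewrite E1 in Hxc. rewrite Rabs_mult, (Rabs_pos_eq g) in Hxc by lra. nra. }
        intros j Hj. replace (p j - zz (S m) j) with ((p j - x j) + (x j - zz (S m) j)) by ring.
        eapply Rle_lt_trans; [apply Rabs_triang|]. rewrite Ex, Rabs_mult, (Rabs_pos_eq g) by lra.
        pose proof (Hp j Hj). pose proof (zz_range m j Hj). pose proof (Rabs_pos (zz m j - F m j)). fold x in H. nra. }
      destruct (NF_exen (S m)) as [HcS [HeS [HneS' _]]].
      exists (S m), p, 0. split; [exact He0|]. split.
      { apply dB_of_close; [lra|]. intros j Hj. pose proof (Hcl j Hj). lra. }
      split; [split; [lra|left; apply tau_pos]|]. split; [intros j Hj; rewrite flw_0; reflexivity|]. split.
      * rewrite HenS. unfold wside, side in *. rewrite (NF_bxnext m (ex m) Hc).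
        rewrite Nat.eqb_refl. destruct (bx m (ex m)); simpl; lra.
      * apply (close_side (S m) p (5 * d)); try assumption; [unfold Rr in *; lra|auto|]. pose proof (Hcl (ex (S m)) HcS). lra.
  -
    set (k0 := (m + 9)%nat).
    assert (HS : S k0 = (m + 10)%nat) by (unfold k0; lia).
    assert (Hbx : bx (S k0) = bx m) by (rewrite HS; apply bx_per).
    destruct (NF_exen k0) as [Hc0 [He0' [Hne0 HenS0]]].
    assert (Hexk : ex k0 = en m) by (rewrite <- HenS0, HS; apply en_per).
    assert (Hcl : forall j, (j < 10)%nat -> Rabs (p j - zz m j) < 5 * d).
    { set (x := flw m (zz m) s).
      set (g := 1 - exp (- s)).
      assert (Hg : 0 <= g) by (unfold g; pose proof (one_minus_exp s ltac:(lra)); lra).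
      assert (Ex : forall j, x j - zz m j = - ((zz m j - F m j) * g)).
      { intros j. unfold x, g, flw. ring. }
      assert (Hxe : x (en m) - 1/2 = (F m (en m) - 1/2) * g).
      { pose proof (Ex (en m)) as E. rewrite zz_wall in E. lra. }
      assert (HF := NF_Fe m). rewrite <- F_eq in HF by exact He.
      pose proof (NF_Fhalf m (en m) He) as HF2. rewrite <- F_eq in HF2 by exact He.
      pose proof (Hp (en m) He) as Hpe. fold x in Hpe. apply Rabs_def2 in Hpe as [Hp1 Hp2].
      assert (Hgd : g < 2 * d).
      { unfold side, wside in HF, Hw. revert HF Hw. destruct (bx m (en m)); intros HF Hw0.
        - apply Rnot_le_lt in Hw0. nra.
        - apply Rnot_le_lt in Hw0. nra. }
      intros j Hj. replace (p j - zz m j) with ((p j - x j) + (x j - zz m j)) by ring.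
      eapply Rle_lt_trans; [apply Rabs_triang|]. rewrite Ex, Rabs_Ropp, Rabs_mult, (Rabs_pos_eq g) by lra.
      pose proof (Hp j Hj). pose proof (zz_range m j Hj). pose proof (Rabs_pos (zz m j - F m j)). fold x in H. nra. }
    exists k0, (bflw k0 p (tau k0)), (tau k0). split; [exact He0|]. split.
    { apply dB_of_close; [lra|]. intros j Hj. rewrite bflw_dist.
      assert (E : flw k0 (zz k0) (tau k0) j = zz m j).
      { unfold tau. rewrite flw_tau by (pose proof (zz_io k0); lra).
        change (Pm k0 (zz k0) j) with (zz (S k0) j). rewrite HS, zz_per by exact Hj. reflexivity. }
      rewrite E. pose proof (Hcl j Hj). pose proof (exp_tau_le k0 (tau k0) ltac:(lra)).
      pose proof (exp_pos (tau k0)). pose proof (Rabs_pos (p j - zz m j)). nra. }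
    split; [split; [pose proof (tau_pos k0); lra|right; reflexivity]|]. split; [intros j Hj; symmetry; apply bflw_flw|]. split.
    + apply side_wside. apply side_next; [exact He0'|exact Hne0|]. rewrite Hbx.
      apply (close_side m p (5 * d)); [unfold Rr in *; lra|exact He0'| |].
      * rewrite <- Hexk. exact Hne0.
      * pose proof (Hcl (en k0) He0'). lra.
    + rewrite Hexk. unfold side. unfold wside in Hw.
      pose proof (NF_bxnext k0 (ex k0) Hc0) as B. rewrite Nat.eqb_refl, Hbx, Hexk in B.
      revert Hw. destruct (bx k0 (en m)); simpl in B; rewrite B; intros Hw0; lra.
Qed.


Definition UL : list R := [250000006795274278450144034084966130467222353/250000000000000000000000000000000000000000000; 1000000054362194966413192582537739229787072859/1000000000000000000000000000000000000000000000; 500000054362196444037313365697665538294063977/500000000000000000000000000000000000000000000; 1000000217448797597142862343203134825528265897/1000000000000000000000000000000000000000000000; 250000108724410619566325282402433390725042027/250000000000000000000000000000000000000000000; 12500010872443426156125442653588990473970179/12500000000000000000000000000000000000000000; 200000347918340945829364520815726088872496497/200000000000000000000000000000000000000000000; 62500217449152227349550479206312035846127999/62500000000000000000000000000000000000000000; 1000006958384976013439539952322370946877332819/1000000000000000000000000000000000000000000000; 1000013916818371148353489460206519257860510669/1000000000000000000000000000000000000000000000; 8000222670643361042260089849512832307201439/8000000000000000000000000000000000000000000; 1000055668435562376421592361426826376206605591/1000000000000000000000000000000000000000000000; 1000111339970099470805640581014829487025411133/1000000000000000000000000000000000000000000000; 62513918271049242710145887732521381012896697/62500000000000000000000000000000000000000000;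 8003563474123621046181903485418841609656693/8000000000000000000000000000000000000000000; 500445533471295050435106109019079475868667831/500000000000000000000000000000000000000000000; 1001782927885476378610544567375391527764538291/1000000000000000000000000000000000000000000000; 501784517301398783245865738307890666768481927/500000000000000000000000000000000000000000000; 251787701803397774841670090029434988701700723/250000000000000000000000000000000000000000000; 1014352748470988145235959784935931944332612303/1000000000000000000000000000000000000000000000; 128613937291330967876608458185914086401045089/125000000000000000000000000000000000000000000; 1058658871397018533256705335904130980313495151/1000000000000000000000000000000000000000000000; 70047412874225564095303935245324486032710891/62500000000000000000000000000000000000000000; 62804992644764432672034060191404797251231807/50000000000000000000000000000000000000000000; 49305838763861431092805614837341702247626251/31250000000000000000000000000000000000000000; 497882262775378029630332750329805447355925219/200000000000000000000000000000000000000000000; 6197168689658264479902931898179668420651165147/1000000000000000000000000000000000000000000000; 38404899768080730769303950762898631898593690257/1000000000000000000000000000000000000000000000; 737468163098163684015315018904085295069191350733/500000000000000000000000000000000000000000000].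
Definition LL : list R := [26843546329639/26843545600000; 500000027181171250202550371960485975364463229/500000000000000000000000000000000000000000000; 200000021744937591214896723838528935539059953/200000000000000000000000000000000000000000000; 200000043489877546641347676830632760100759561/200000000000000000000000000000000000000000000; 500000217449411375324851157393738500040386299/500000000000000000000000000000000000000000000; 1000000869797834638285434530602060178630985849/1000000000000000000000000000000000000000000000; 1000001739596425824844010511337384698515224239/1000000000000000000000000000000000000000000000; 500001739597938922706381797342093067272452839/500000000000000000000000000000000000000000000; 40000278336154419791277748068040423746787719/40000000000000000000000000000000000000000000; 1000013916856140373849636088176090434512560967/1000000000000000000000000000000000000000000000; 500013916952979816265566749579590815293327339/500000000000000000000000000000000000000000000; 200011133717329117206386866434334779868461877/200000000000000000000000000000000000000000000; 1000111340272282711180988159394906130191636321/1000000000000000000000000000000000000000000000; 4000890771764886617400959904164862930043963/4000000000000000000000000000000000000000000; 1000445435474589378651679281981723221065325103/1000000000000000000000000000000000000000000000; 50044553468097038998417653190718625725183591/50000000000000000000000000000000000000000000; 1001782932728489349485438496625284813677325239/1000000000000000000000000000000000000000000000; 200713808861218603489457453844723440393864911/200000000000000000000000000000000000000000000; 1007150826689444889882991745666217583809382297/1000000000000000000000000000000000000000000000; 1014352787701232257129602616183596533595884863/1000000000000000000000000000000000000000000000; 102891157791726115819915274629572201420890297/100000000000000000000000000000000000000000000; 1058659035172188179448441496850875613398447711/1000000000000000000000000000000000000000000000; 1120758952751708368816236583761975722233540237/1000000000000000000000000000000000000000000000; 314025157543276517963323765037657855257318403/250000000000000000000000000000000000000000000;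 1577788793121274191853464097374670197966213071/1000000000000000000000000000000000000000000000; 2489417475699086970587762531740941538486082421/1000000000000000000000000000000000000000000000; 619719936831601426774069672777785923285534933/100000000000000000000000000000000000000000000; 38405280010656406264743122115944923321032940497/1000000000000000000000000000000000000000000000; 737482766348462266447993230176685474742348499407/500000000000000000000000000000000000000000000].

Lemma UL_step i : (i < 28)%nat -> nth i UL 0 * nth i UL 0 <= nth (S i) UL 0.
Proof. intros Hi. do 28 (destruct i as [|i]; [cbv [nth UL]; lra|]). lia. Qed.
Lemma LL_step i : (i < 28)%nat -> nth (S i) LL 0 <= nth i LL 0 * nth i LL 0.
Proof. intros Hi. do 28 (destruct i as [|i]; [cbv [nth LL]; lra|]). lia. Qed.
Lemma LL_pos i : 0 <= nth i LL 0.
Proof. do 29 (destruct i as [|i]; [cbv [nth LL]; lra|]). cbv [nth LL]. destruct i; lra. Qed.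

Lemma exp_double z : exp (z * 2) = exp z * exp z.
Proof. rewrite <- exp_plus. f_equal. ring. Qed.

Lemma up_chain z : exp z <= nth 0 UL 0 -> forall i, (i <= 28)%nat -> exp (z * 2 ^ i) <= nth i UL 0.
Proof.
  intros H0 i Hi. induction i as [|i IH].
  - simpl. rewrite Rmult_1_r. exact H0.
  - replace (z * 2 ^ S i) with (z * 2 ^ i * 2) by (simpl; ring). rewrite exp_double.
    pose proof (exp_pos (z * 2 ^ i)). specialize (IH ltac:(lia)).
    eapply Rle_trans; [|apply UL_step; lia]. apply Rmult_le_compat; lra.
Qed.

Lemma low_chain z : nth 0 LL 0 <= exp z -> forall i, (i <= 28)%nat -> nth i LL 0 <= exp (z * 2 ^ i).
Proof.
  intros H0 i Hi. induction i as [|i IH].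
  - simpl. rewrite Rmult_1_r. exact H0.
  - replace (z * 2 ^ S i) with (z * 2 ^ i * 2) by (simpl; ring). rewrite exp_double.
    specialize (IH ltac:(lia)). pose proof (LL_pos i).
    eapply Rle_trans; [apply LL_step; lia|]. apply Rmult_le_compat; lra.
Qed.

Lemma exp_up_bound : exp (729637/100000) <= nth 28 UL 0.
Proof.
  set (z := 729637/100000 / 268435456).
  replace (729637/100000) with (z * 2 ^ 28) by (unfold z; simpl; lra).
  apply up_chain; [|lia].
  pose proof (exp_ineq1_le (- z)). pose proof (exp_pos z).
  assert (E : exp z * exp (- z) = 1) by (rewrite <- exp_plus, Rplus_opp_r, exp_0; reflexivity).
  assert (Hz : 0 < 1 - z) by (unfold z; lra).
  assert (exp z * (1 - z) <= 1) by (rewrite <- E; apply Rmult_le_compat_l; lra).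
  assert (exp z <= 1 / (1 - z)).
  { apply (Rmult_le_reg_r (1 - z)); [lra|]. unfold Rdiv. rewrite Rmult_assoc, Rinv_l, Rmult_1_r by lra. lra. }
  eapply Rle_trans; [exact H2|]. unfold z. cbv [nth UL]. lra.
Qed.

Lemma exp_low_bound : nth 28 LL 0 <= exp (729639/100000).
Proof.
  set (z := 729639/100000 / 268435456).
  replace (729639/100000) with (z * 2 ^ 28) by (unfold z; simpl; lra).
  apply low_chain; [|lia].
  pose proof (exp_ineq1_le z). eapply Rle_trans; [|exact H]. unfold z. cbv [nth LL]. lra.
Qed.

Fixpoint pio (n : nat) : R := match n with O => 1 | S n' => pio n' * io n' (zz n') end.
Fixpoint pIL (n : nat) : R := match n with O => 1 | S n' => pIL n' * IL n' end.
Fixpoint pIH (n : nat) : R := match n with O => 1 | S n' => pIH n' * IH n' end.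

Lemma exp_tsf n : exp (tsf n) = pio n.
Proof. induction n as [|n IH]; simpl. apply exp_0.
  rewrite exp_plus, IH. unfold tau. rewrite exp_ln by (pose proof (zz_io n); lra). reflexivity. Qed.

Lemma pio_bounds n : 0 < pIL n /\ pIL n <= pio n <= pIH n.
Proof.
  induction n as [|n [IH1 [IH2 IH3]]]; simpl; [lra|].
  assert (inB n Rr (zz n)) by (apply (inB_weaken n (Rr/2)); [pose Rr_pos; lra|apply zz_inB]).
  pose proof (io_bounds n (zz n) H). pose proof (NF_IL n).
  split; [apply Rmult_lt_0_compat; lra|]. split; apply Rmult_le_compat; lra.
Qed.

Lemma pIL_val : nth 28 UL 0 < pIL 10 /\ 147496/100 - 1/100 < pIL 10.
Proof. simpl pIL. cbv [IL ILL nth UL Nat.modulo Nat.divmod fst snd Nat.sub]. lra. Qed.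
Lemma pIH_val : pIH 10 < nth 28 LL 0 /\ pIH 10 < 147496/100 + 1/100.
Proof. simpl pIH. cbv [IH IHL nth LL Nat.modulo Nat.divmod fst snd Nat.sub]. lra. Qed.

Lemma T0_facts : Rabs (T0 - 729638/100000) < 1/100000 /\ Rabs (exp T0 - 147496/100) < 1/100.
Proof.
  pose proof (exp_tsf 10) as E. fold T0 in E. pose proof (pio_bounds 10) as [_ [B1 B2]].
  pose proof pIL_val. pose proof pIH_val. pose proof exp_up_bound. pose proof exp_low_bound.
  split.
  - apply Rabs_def1.
    + assert (T0 < 729639/100000). { apply exp_lt_inv. lra. } lra.
    + assert (729637/100000 < T0). { apply exp_lt_inv. lra. } lra.
  - apply Rabs_def1; lra.
Qed.

Lemma vstar_ok : forall j, (j < 10)%nat -> Rabs ((zz 0 j - 1/2) - List.nth j vstar 0) < 1/100000.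
Proof.
  intros j Hj. pose proof (zz_inB 0 j Hj) as H. apply Rabs_le_iff in H.
  assert (N : Rabs (a 0 j - 1/2 - List.nth j vstar 0) + Rr / 2 * Y 0 j < 1/100000).
  { unfold Rr. c10 Hj; cbv [a Y AL YL vstar nth Nat.modulo Nat.divmod fst snd Nat.sub]; rabs. }
  replace (zz 0 j - 1/2 - List.nth j vstar 0) with ((zz 0 j - a 0 j) + (a 0 j - 1/2 - List.nth j vstar 0)) by ring.
  eapply Rle_lt_trans; [apply Rabs_triang|]. apply Rabs_le_iff in H. lra.
Qed.

Lemma stab : asymptotically_stable_orbit kappa1 kappa2 gg T0.
Proof.
  pose proof Rr_pos as HR.
  split; [|split].
  - exists (Rr / 3000). split; [lra|]. intros p Hp.
    destruct (init_red p (Rr / 3000) ltac:(lra) ltac:(lra) Hp) as [k0 [w0 [s0 HT]]].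
    exists (hh k0 p). split; [apply (hh_sol k0 w0 (1500 * (Rr / 3000)) s0 p HT)|].
    apply (hh_0 k0 w0 (1500 * (Rr / 3000)) s0 p HT).
  - intros eps Heps. set (d := Rmin (Rr / 3000) (eps / 3000)).
    assert (Hd1 : d <= Rr / 3000) by apply Rmin_l. assert (Hd2 : d <= eps / 3000) by apply Rmin_r.
    assert (Hd0 : 0 < d) by (apply Rmin_glb_lt; lra).
    exists d. split; [exact Hd0|]. intros h Hs Hn t Ht.
    destruct (init_red (h 0) d Hd0 ltac:(lra) Hn) as [k0 [w0 [s0 HT]]].
    apply (sol_near k0 w0 (1500 * d) s0 (h 0) h HT Hs (fun j _ => eq_refl) 0 t eps).
    + simpl. exact Ht.
    + simpl. lra.
  - exists (Rr / 3000). split; [lra|]. intros h Hs Hn eps Heps.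
    destruct (init_red (h 0) (Rr / 3000) ltac:(lra) ltac:(lra) Hn) as [k0 [w0 [s0 HT]]].
    destruct (pow_lt_1_zero th ltac:(unfold th; rewrite Rabs_pos_eq; lra) (eps / (1500 * (Rr / 3000) + 1))
      ltac:(apply Rdiv_lt_0_compat; lra)) as [N HN].
    exists (tt k0 (h 0) N). split.
    { destruct (tt_facts k0 w0 (1500 * (Rr / 3000)) s0 (h 0) HT) as [Hm [_ H0]].
      clear HN. induction N as [|N IH]; [rewrite H0; lra|]. pose proof (Hm N). lra. }
    intros t Ht. apply (sol_near k0 w0 (1500 * (Rr / 3000)) s0 (h 0) h HT Hs (fun j _ => eq_refl) N t eps Ht).
    specialize (HN N (le_n N)). rewrite Rabs_pos_eq in HN by (apply pow_le; unfold th; lra).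
    assert (Hx : th ^ N * (1500 * (Rr / 3000) + 1) < eps).
    { apply (Rmult_lt_compat_r (1500 * (Rr / 3000) + 1)) in HN; [|lra].
      unfold Rdiv in HN. rewrite Rmult_assoc, Rinv_l, Rmult_1_r in HN by lra. exact HN. }
    pose proof (pow_th_le N). nra.
Qed.

Lemma gg_periodic : gg T0 = gg 0.
Proof.
  apply functional_extensionality. intros j. destruct (lt_dec j 10) as [Hj|Hj].
  - rewrite (gg_eq 9 T0 j) by (try lia; unfold T0; pose proof (tsf_lt 9); lra).
    rewrite (gg_eq 0 0 j) by (try lia; pose proof (tsf_lt 0); simpl tsf in *; lra).
    rewrite Rminus_0_r, flw_0. unfold T0.
    replace (tsf 10 - tsf 9) with (ln (io 9 (zz 9))) by (change (tsf 10) with (tsf 9 + tau 9); unfold tau; ring).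
    rewrite flw_tau by (pose proof (zz_io 9); lra).
    change (Pm 9 (zz 9) j) with (zz (0 + 10) j). apply zz_per. exact Hj.
  - unfold gg. replace (Nat.ltb j 10) with false by (symmetry; apply Nat.ltb_ge; lia). reflexivity.
Qed.

Theorem mainTheorem2 :
  exists (g : R -> state) (T : R) (ts : nat -> R),
    0 < T /\
    traj_pieces kappa1 kappa2 g 10 ts cycle_box T /\
    g T = g 0 /\
    g 0 2%nat = 1/2 /\
    (forall j, (j < 10)%nat -> Rabs ((g 0 j - 1/2) - List.nth j vstar 0) < 1/100000) /\
    Rabs (T - 729638/100000) < 1/100000 /\
    Rabs (exp T - 147496/100) < 1/100 /\
    asymptotically_stable_orbit kappa1 kappa2 g T.
Proof.
  exists gg, T0, tsf.
  assert (G0 : forall j, (j < 10)%nat -> gg 0 j = zz 0 j).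
  { intros j Hj. rewrite (gg_eq 0 0 j) by (try lia; pose proof (tsf_lt 0); simpl tsf in *; lra).
    simpl tsf. rewrite Rminus_0_r. apply flw_0. }
  split; [unfold T0; pose proof (tsf_lt 9); pose proof (tsf_nonneg 9); lra|].
  split; [exact gg_traj|].
  split; [exact gg_periodic|].
  split; [rewrite G0 by lia; change 2%nat with (en 0); apply zz_wall|].
  split; [intros j Hj; rewrite G0 by exact Hj; apply vstar_ok; exact Hj|].
  destruct T0_facts as [H1 H2]. split; [exact H1|]. split; [exact H2|]. exact stab.
Qed.
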